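(* Let $T=\operatorname{Th}(\mathbb{Z};+,<,0)$ (Presburger arithmetic), $\mathcal{U}$ a monster model of $T$ containing $\mathbb{Z}$ as an elementary submodel, and $\mu\in\mathfrak{M}_x(\mathcal{U})$, $\nu\in\mathfrak{M}_y(\mathcal{U})$ (one variable each). (1) If $\mu(x>b)=\nu(y>b)=1$ for every $b\in\mathcal{U}$, then $\mu\geq_{\mathbb{E},\mathbb{Z}}\nu$. (2) If $\mu(x<b)=\nu(y<b)=1$ for every $b\in\mathcal{U}$, then $\mu\geq_{\mathbb{E},\mathbb{Z}}\nu$.
   Context: For $C\subseteq\mathcal{U}$, $\mathcal{L}_x(C)$ is the Boolean algebra of formulas in $x$ with parameters from $C$ modulo $T$, embedded in $\mathcal{L}_{xy}(C)$ via $\varphi(x)\mapsto\varphi(x)\wedge y=y$; $\mathfrak{M}_x(C)$ is the set of finitely additive probability measures (Keisler measures) on $\mathcal{L}_x(C)$. For $\omega\in\mathfrak{M}_{xy}(C)$, $\pi_x(\omega)(\varphi(x))=\omega(\varphi(x)\wedge y=y)$ (similarly $\pi_y$); $\omega|_D$ is restriction. $\mu\geq_{\mathbb{E},\mathbb{Z}}\nu$ means there is $\lambda\in\mathfrak{M}_{xy}(\mathbb{Z})$ with $\pi_x(\lambda)=\mu|_{\mathbb{Z}}$ such that every $\omega\in\mathfrak{M}_{xy}(\mathcal{U})$ with $\omega|_{\mathbb{Z}}=\lambda$ and $\pi_x(\omega)=\mu$ satisfies $\pi_y(\omega)=\nu$. *)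

(* Defs.v *)
From Stdlib Require Import Reals ZArith List.
Set Implicit Arguments.

Record structure := Struct {
  car :> Type;
  s0 : car;
  sadd : car -> car -> car;
  slt : car -> car -> Prop }.

Inductive term (P : Type) : Type :=
| tvar (n : nat) | tpar (p : P) | tzero | tadd (t1 t2 : term P).

Inductive form (P : Type) : Type :=
| feq (t1 t2 : term P) | flt (t1 t2 : term P) | fbot
| fneg (f : form P) | fand (f g : form P) | fex (n : nat) (f : form P).

Arguments tvar {P}. Arguments tzero {P}. Arguments fbot {P}.

Definition fOr (P : Type) (f g : form P) : form P := fneg (fand (fneg f) (fneg g)).

Definition upd (M : Type) (v : nat -> M) (n : nat) (a : M) : nat -> M :=
  fun k => if Nat.eqb k n then a else v k.

Fixpoint teval {M : structure} (v : nat -> M) (t : term M) : M :=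
  match t with
  | tvar n => v n
  | tpar p => p
  | tzero => s0 M
  | tadd t1 t2 => sadd M (teval v t1) (teval v t2)
  end.

Fixpoint sat {M : structure} (v : nat -> M) (f : form M) : Prop :=
  match f with
  | feq t1 t2 => teval v t1 = teval v t2
  | flt t1 t2 => slt M (teval v t1) (teval v t2)
  | fbot => False
  | fneg g => ~ sat v g
  | fand g h => sat v g /\ sat v h
  | fex n g => exists a : M, sat (upd v n a) g
  end.

Fixpoint tmap (P Q : Type) (i : P -> Q) (t : term P) : term Q :=
  match t with
  | tvar n => tvar n
  | tpar p => tpar (i p)
  | tzero => tzero
  | tadd t1 t2 => tadd (tmap i t1) (tmap i t2)
  end.

Fixpoint fmap (P Q : Type) (i : P -> Q) (f : form P) : form Q :=
  match f with
  | feq t1 t2 => feq (tmap i t1) (tmap i t2)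
  | flt t1 t2 => flt (tmap i t1) (tmap i t2)
  | fbot => fbot
  | fneg g => fneg (fmap i g)
  | fand g h => fand (fmap i g) (fmap i h)
  | fex n g => fex n (fmap i g)
  end.

Fixpoint tfv_in (P : Type) (S : nat -> Prop) (t : term P) : Prop :=
  match t with
  | tvar n => S n
  | tpar _ => True
  | tzero => True
  | tadd t1 t2 => tfv_in S t1 /\ tfv_in S t2
  end.

Fixpoint fv_in (P : Type) (S : nat -> Prop) (f : form P) : Prop :=
  match f with
  | feq t1 t2 | flt t1 t2 => tfv_in S t1 /\ tfv_in S t2
  | fbot => True
  | fneg g => fv_in S g
  | fand g h => fv_in S g /\ fv_in S h
  | fex n g => fv_in (fun k => k = n \/ S k) g
  end.

Fixpoint tpar_in (P : Type) (C : P -> Prop) (t : term P) : Prop :=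
  match t with
  | tvar _ => True
  | tpar p => C p
  | tzero => True
  | tadd t1 t2 => tpar_in C t1 /\ tpar_in C t2
  end.

Fixpoint par_in (P : Type) (C : P -> Prop) (f : form P) : Prop :=
  match f with
  | feq t1 t2 | flt t1 t2 => tpar_in C t1 /\ tpar_in C t2
  | fbot => True
  | fneg g => par_in C g
  | fand g h => par_in C g /\ par_in C h
  | fex _ g => par_in C g
  end.

Definition Zstruct : structure := @Struct Z 0%Z Z.add Z.lt.

Definition elementary_emb (M N : structure) (i : M -> N) : Prop :=
  forall (f : form M) (v : nat -> M),
    sat v f <-> sat (fun n => i (v n)) (fmap i f).

(* Variables: x = variable 0, y = variable 1. *)
Definition Sx : nat -> Prop := fun k => k = 0%nat.
Definition Sy : nat -> Prop := fun k => k = 1%nat.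
Definition Sxy : nat -> Prop := fun k => k = 0%nat \/ k = 1%nat.
Definition vx {P : Type} : term P := tvar 0.
Definition vy {P : Type} : term P := tvar 1.

Definition formula_in {U : structure} (C : U -> Prop) (S : nat -> Prop)
  (f : form U) : Prop := fv_in S f /\ par_in C f.

(* Equivalence modulo T (U is a model of the elementary diagram). *)
Definition fequiv {U : structure} (f g : form U) : Prop :=
  forall v : nat -> U, sat v f <-> sat v g.

(* m : form U -> R represents a Keisler measure on L_S(C), i.e. a finitely
   additive probability measure on the Lindenbaum algebra of formulas with
   free variables in S and parameters from C modulo T.  Values of m outside
   those formulas are irrelevant. *)
Definition keisler {U : structure} (C : U -> Prop) (S : nat -> Prop)
  (m : form U -> R) : Prop :=
  (forall f g, formula_in C S f -> formula_in C S g -> fequiv f g -> m f = m g)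
  /\ (forall f, formula_in C S f -> (0 <= m f)%R)
  /\ (forall f, formula_in C S f -> (forall v, sat v f) -> m f = 1%R)
  /\ (forall f g, formula_in C S f -> formula_in C S g ->
        (forall v, ~ (sat v f /\ sat v g)) -> m (fOr f g) = (m f + m g)%R).

Definition inZ {U : structure} (iota : Z -> U) : U -> Prop :=
  fun u => exists z : Z, u = iota z.

Definition allU (U : structure) : U -> Prop := fun _ => True.

Definition geqEZ {U : structure} (iota : Z -> U) (mu nu : form U -> R) : Prop :=
  exists lam : form U -> R,
    keisler (inZ iota) Sxy lam /\
    (forall f, formula_in (inZ iota) Sx f -> lam (fand f (feq vy vy)) = mu f) /\
    (forall om : form U -> R,
        keisler (@allU U) Sxy om ->
        (forall f, formula_in (inZ iota) Sxy f -> om f = lam f) ->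
        (forall f, formula_in (@allU U) Sx f -> om (fand f (feq vy vy)) = mu f) ->
        forall f, formula_in (@allU U) Sy f -> om (fand (feq vx vx) f) = nu f).

(* |A| < |U| *)
Definition small {U : structure} (A : U -> Prop) : Prop :=
  ~ exists g : U -> U, (forall a b, g a = g b -> a = b) /\ (forall a, A (g a)).

Definition saturated (U : structure) : Prop :=
  forall (A : U -> Prop) (p : form U -> Prop),
    small A ->
    (forall f, p f -> formula_in A Sx f) ->
    (forall l : list (form U), (forall f, In f l -> p f) ->
        exists v : nat -> U, forall f, In f l -> sat v f) ->
    exists v : nat -> U, forall f, p f -> sat v f.

(* Main.v *)
Require Import Defs.
From Stdlib Require Import Reals ZArith List Lia Lra Classical FunctionalExtensionality PropExtensionality ClassicalEpsilon.

Section Gen.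
Context {M : Type}.
Lemma upd_same (v : nat -> M) n a : upd v n a n = a.
Proof. unfold upd. now rewrite Nat.eqb_refl. Qed.
Lemma upd_other (v : nat -> M) n a k : k <> n -> upd v n a k = v k.
Proof. intro H. unfold upd. destruct (Nat.eqb_spec k n); congruence. Qed.
Lemma upd_upd (v : nat -> M) n a b : upd (upd v n a) n b = upd v n b.
Proof. apply functional_extensionality; intro k. unfold upd. destruct (Nat.eqb k n); auto. Qed.
Lemma upd_comm (v : nat -> M) n m a b : n <> m -> upd (upd v n a) m b = upd (upd v m b) n a.
Proof. intro H. apply functional_extensionality; intro k. unfold upd.
 destruct (Nat.eqb_spec k m); destruct (Nat.eqb_spec k n); subst; auto; congruence. Qed.
Lemma upd_id (v : nat -> M) n : upd v n (v n) = v.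
Proof. apply functional_extensionality; intro k. unfold upd. destruct (Nat.eqb_spec k n); subst; auto. Qed.
End Gen.

Definition fall {P : Type} (n : nat) (f : form P) : form P := fneg (fex n (fneg f)).
Definition fimp {P : Type} (f g : form P) : form P := fneg (fand f (fneg g)).
Definition fiff {P : Type} (f g : form P) : form P := fand (fimp f g) (fimp g f).

Lemma sat_fall {U : structure} (v : nat -> U) n f : sat v (fall n f) <-> forall a, sat (upd v n a) f.
Proof. simpl. split.
- intros H a. apply NNPP. intro H'. apply H. eauto.
- intros H [a Ha]. apply Ha, H. Qed.
Lemma sat_fimp {U : structure} (v : nat -> U) f g : sat v (fimp f g) <-> (sat v f -> sat v g).
Proof. simpl. split; intros H. intro. apply NNPP. tauto. tauto. Qed.
Lemma sat_fiff {U : structure} (v : nat -> U) f g : sat v (fiff f g) <-> (sat v f <-> sat v g).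
Proof. unfold fiff. change (sat v (fand (fimp f g) (fimp g f))) with (sat v (fimp f g) /\ sat v (fimp g f)). rewrite !sat_fimp. tauto. Qed.
Lemma sat_fOr {U : structure} (v : nat -> U) (f g : form U) : sat v (fOr f g) <-> sat v f \/ sat v g.
Proof. simpl. split. intro H. apply NNPP. tauto. tauto. Qed.

Fixpoint tbnd {P : Type} (t : term P) : nat :=
  match t with tvar n => S n | tpar _ => 0 | tzero => 0 | tadd t1 t2 => max (tbnd t1) (tbnd t2) end.
Fixpoint fbnd {P : Type} (f : form P) : nat :=
  match f with
  | feq t1 t2 | flt t1 t2 => max (tbnd t1) (tbnd t2)
  | fbot => 0 | fneg g => fbnd g | fand g h => max (fbnd g) (fbnd h)
  | fex n g => max (S n) (fbnd g) end.

Lemma teval_fresh {U : structure} (t : term U) (v w : nat -> U) :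
  (forall n, n < tbnd t -> v n = w n) -> teval v t = teval w t.
Proof. induction t; simpl; intros H; try reflexivity.
- apply H; lia.
- rewrite IHt1, IHt2; auto; intros n Hn; apply H; lia. Qed.

Arguments teval_fresh {U} t v w.
Lemma sat_fresh {U : structure} (f : form U) : forall (v w : nat -> U),
  (forall n, n < fbnd f -> v n = w n) -> (sat v f <-> sat w f).
Proof. induction f; simpl; intros v w H.
- rewrite (teval_fresh t1 v w), (teval_fresh t2 v w); try tauto; intros; apply H; lia.
- rewrite (teval_fresh t1 v w), (teval_fresh t2 v w); try tauto; intros; apply H; lia.
- tauto.
- rewrite (IHf v w); tauto.
- rewrite (IHf1 v w), (IHf2 v w); try tauto; intros; apply H; lia.
- assert (Hu : forall a, forall k, k < fbnd f -> upd v n a k = upd w n a k).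
  { intros a k Hk; unfold upd; destruct (Nat.eqb_spec k n); auto. apply H; destruct (fbnd f); lia. }
  split; intros [a Ha]; exists a; [rewrite <- (IHf _ _ (Hu a)) | rewrite (IHf _ _ (Hu a))]; exact Ha. Qed.

Arguments sat_fresh {U} f v w.
Lemma tbnd_map {P Q : Type} (i : P -> Q) t : tbnd (tmap i t) = tbnd t.
Proof. induction t; simpl; auto. Qed.
Lemma fbnd_map {P Q : Type} (i : P -> Q) f : fbnd (fmap i f) = fbnd f.
Proof. induction f; simpl; rewrite ?tbnd_map, ?IHf, ?IHf1, ?IHf2; auto. Qed.

Lemma teval_fv {U : structure} (S : nat -> Prop) (t : term U) (v w : nat -> U) :
  (forall n, S n -> v n = w n) -> tfv_in S t -> teval v t = teval w t.
Proof. induction t; simpl; intros H Ht; auto. destruct Ht. rewrite IHt1, IHt2; auto. Qed.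

Arguments teval_fv {U} S t v w.
Lemma sat_fv {U : structure} (f : form U) : forall (S : nat -> Prop) (v w : nat -> U),
  (forall n, S n -> v n = w n) -> fv_in S f -> (sat v f <-> sat w f).
Proof. induction f; simpl; intros S v w H Hf.
- destruct Hf. rewrite (teval_fv S t1 v w), (teval_fv S t2 v w); auto; tauto.
- destruct Hf. rewrite (teval_fv S t1 v w), (teval_fv S t2 v w); auto; tauto.
- tauto.
- rewrite (IHf S v w); tauto.
- destruct Hf. rewrite (IHf1 S v w), (IHf2 S v w); tauto.
- assert (Hu : forall a, forall k, (k = n \/ S k) -> upd v n a k = upd w n a k).
  { intros a k [Hk|Hk]; unfold upd; destruct (Nat.eqb_spec k n); auto; congruence. }
  split; intros [a Ha]; exists a; [rewrite <- (IHf _ _ _ (Hu a) Hf) | rewrite (IHf _ _ _ (Hu a) Hf)]; exact Ha. Qed.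

Arguments sat_fv {U} f S v w.
Lemma tfv_mono {P : Type} (S S' : nat -> Prop) (t : term P) : (forall k, S k -> S' k) -> tfv_in S t -> tfv_in S' t.
Proof. induction t; simpl; intuition. Qed.
Lemma fv_mono {P : Type} (f : form P) : forall (S S' : nat -> Prop), (forall k, S k -> S' k) -> fv_in S f -> fv_in S' f.
Proof. induction f; simpl; intros S S' H Hf; intuition eauto using tfv_mono.
 eapply IHf; [|exact Hf]. simpl; intuition. Qed.

Lemma tpar_allU {U : structure} (t : term U) : tpar_in (@allU U) t.
Proof. induction t; simpl; unfold allU; auto. Qed.
Lemma par_allU {U : structure} (f : form U) : par_in (@allU U) f.
Proof. induction f; simpl; auto using tpar_allU. Qed.

Fixpoint fallN {P : Type} (K : nat) (f : form P) : form P :=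
  match K with 0 => f | S K => fallN K (fall K f) end.

Lemma sat_fallN {U : structure} K : forall (f : form U) (v : nat -> U),
  sat v (fallN K f) <-> forall w, (forall n, K <= n -> w n = v n) -> sat w f.
Proof. induction K; simpl; intros f v.
- split. intros H w Hw. replace w with v; auto. apply functional_extensionality; intro; symmetry; apply Hw; lia.
  intro H; apply H; auto.
- rewrite IHK. split.
  + intros H w' Hw'. specialize (H (upd w' K (v K))). rewrite sat_fall in H.
    assert (Hw : forall n, K <= n -> upd w' K (v K) n = v n).
    { intros n Hn. unfold upd. destruct (Nat.eqb_spec n K); subst; auto. apply Hw'; lia. }
    specialize (H Hw (w' K)). rewrite upd_upd, upd_id in H. exact H.
  + intros H w Hw. rewrite sat_fall. intro a. apply H. intros n Hn. rewrite upd_other by lia. apply Hw; lia. Qed.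

Lemma fmap_fallN {P Q : Type} (i : P -> Q) K : forall f, fmap i (fallN K f) = fallN K (fmap i f).
Proof. induction K; simpl; intros; auto. Qed.

Section Transfer.
Variable U : structure.
Variable iota : Z -> U.
Hypothesis Hel : elementary_emb Zstruct U iota.

Lemma transfer (T : form Zstruct) : (forall v : nat -> Zstruct, sat v T) ->
  forall w : nat -> U, sat w (fmap iota T).
Proof. intros HT w.
  set (K := fbnd T).
  assert (H1 : forall v : nat -> Zstruct, sat v (fallN K T)).
  { intro v. rewrite sat_fallN. intros; apply HT. }
  specialize (H1 (fun _ => 0%Z)). apply Hel in H1. rewrite fmap_fallN, sat_fallN in H1.
  set (w' := fun n => if n <? K then w n else iota 0%Z).
  rewrite (sat_fresh _ w w'). apply H1. intros n Hn. unfold w'. destruct (Nat.ltb_spec n K). exfalso; apply (proj1 (Nat.le_ngt K n) Hn H). reflexivity.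
  intros n Hn. rewrite fbnd_map in Hn. unfold w'. destruct (Nat.ltb_spec n K). reflexivity. exfalso; apply (proj1 (Nat.le_ngt K n) H Hn). Qed.
End Transfer.

Section Abs.
Variable U : structure.
Variable iota : Z -> U.

Fixpoint tabs (K : nat) (t : term U) : term Zstruct * list U :=
  match t with
  | tvar n => (tvar n, nil)
  | tpar p => (tvar K, p :: nil)
  | tzero => (tzero, nil)
  | tadd t1 t2 => let (a1, l1) := tabs K t1 in let (a2, l2) := tabs (K + length l1) t2 in
                  (tadd a1 a2, l1 ++ l2)
  end.

Fixpoint fabs (K : nat) (f : form U) : form Zstruct * list U :=
  match f with
  | feq t1 t2 => let (a1, l1) := tabs K t1 in let (a2, l2) := tabs (K + length l1) t2 in
                  (feq a1 a2, l1 ++ l2)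
  | flt t1 t2 => let (a1, l1) := tabs K t1 in let (a2, l2) := tabs (K + length l1) t2 in
                  (flt a1 a2, l1 ++ l2)
  | fbot => (fbot, nil)
  | fneg g => let (a, l) := fabs K g in (fneg a, l)
  | fand g h => let (a1, l1) := fabs K g in let (a2, l2) := fabs (K + length l1) h in
                  (fand a1 a2, l1 ++ l2)
  | fex n g => let (a, l) := fabs K g in (fex n a, l)
  end.

Lemma tabs_ok (t : term U) : forall B K (v w : nat -> U) d,
  tbnd t <= B -> B <= K -> (forall n, n < B -> w n = v n) ->
  (forall i, i < length (snd (tabs K t)) -> w (K + i) = nth i (snd (tabs K t)) d) ->
  teval w (tmap iota (fst (tabs K t))) = teval v t.
Proof. induction t; simpl; intros B K v w d Hb HK Hv Hl.
- apply Hv; lia.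
- specialize (Hl 0 ltac:(lia)). rewrite Nat.add_0_r in Hl. exact Hl.
- reflexivity.
- specialize (IHt1 B K v w d). specialize (IHt2 B (K + length (snd (tabs K t1))) v w d).
  destruct (tabs K t1) as [a1 l1]. simpl snd in *. destruct (tabs (K + length l1) t2) as [a2 l2]. simpl in *.
  rewrite IHt1, IHt2; auto; try lia.
  + intros i Hi. rewrite <- Nat.add_assoc, Hl by (rewrite length_app; lia).
    rewrite app_nth2 by lia. f_equal; f_equal; lia.
  + intros i Hi. rewrite Hl by (rewrite length_app; lia). rewrite app_nth1 by lia. reflexivity.
Qed.

Lemma fabs_ok (f : form U) : forall B K (v w : nat -> U) d,
  fbnd f <= B -> B <= K -> (forall n, n < B -> w n = v n) ->
  (forall i, i < length (snd (fabs K f)) -> w (K + i) = nth i (snd (fabs K f)) d) ->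
  (sat w (fmap iota (fst (fabs K f))) <-> sat v f).
Proof. induction f; simpl; intros B K v w d Hb HK Hv Hl.
- pose proof (tabs_ok t1 B K v w d). pose proof (tabs_ok t2 B (K + length (snd (tabs K t1))) v w d).
  destruct (tabs K t1) as [a1 l1]. simpl snd in *. destruct (tabs (K + length l1) t2) as [a2 l2]. simpl in *.
  rewrite H, H0; try tauto; try lia; auto.
  + intros i Hi. rewrite <- Nat.add_assoc, Hl by (rewrite length_app; lia).
    rewrite app_nth2 by lia. f_equal; f_equal; lia.
  + intros i Hi. rewrite Hl by (rewrite length_app; lia). rewrite app_nth1 by lia. reflexivity.
- pose proof (tabs_ok t1 B K v w d). pose proof (tabs_ok t2 B (K + length (snd (tabs K t1))) v w d).
  destruct (tabs K t1) as [a1 l1]. simpl snd in *. destruct (tabs (K + length l1) t2) as [a2 l2]. simpl in *.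
  rewrite H, H0; try tauto; try lia; auto.
  + intros i Hi. rewrite <- Nat.add_assoc, Hl by (rewrite length_app; lia).
    rewrite app_nth2 by lia. f_equal; f_equal; lia.
  + intros i Hi. rewrite Hl by (rewrite length_app; lia). rewrite app_nth1 by lia. reflexivity.
- tauto.
- specialize (IHf B K v w d). destruct (fabs K f) as [a l]. simpl in *. rewrite IHf; auto; tauto.
- specialize (IHf1 B K v w d). specialize (IHf2 B (K + length (snd (fabs K f1))) v w d).
  destruct (fabs K f1) as [a1 l1]. simpl snd in *. destruct (fabs (K + length l1) f2) as [a2 l2]. simpl in *.
  rewrite IHf1, IHf2; try tauto; try lia; auto.
  + intros i Hi. rewrite <- Nat.add_assoc, Hl by (rewrite length_app; lia).
    rewrite app_nth2 by lia. f_equal; f_equal; lia.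
  + intros i Hi. rewrite Hl by (rewrite length_app; lia). rewrite app_nth1 by lia. reflexivity.
- specialize (IHf B K). destruct (fabs K f) as [a l]. simpl in *.
  assert (Hn : n < B /\ fbnd f <= B) by (revert Hb; destruct (fbnd f); lia).
  assert (H1 : forall x, forall k, k < B -> upd w n x k = upd v n x k).
  { intros x k Hk. unfold upd. destruct (Nat.eqb k n); auto. }
  assert (H2 : forall x, forall i, i < length l -> upd w n x (K + i) = nth i l d).
  { intros x i Hi. rewrite upd_other by lia. auto. }
  split; intros [x Hx]; exists x.
  + rewrite <- (IHf (upd v n x) (upd w n x) d); [exact Hx|lia|lia|apply H1|apply H2].
  + rewrite (IHf (upd v n x) (upd w n x) d); [exact Hx|lia|lia|apply H1|apply H2].
Qed.

Definition mix (K : nat) (v e : nat -> U) : nat -> U := fun n => if n <? K then v n else e n.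

Lemma abstraction (f : form U) : exists (g : form Zstruct) (K : nat) (e : nat -> U),
  fbnd f <= K /\ 2 <= K /\ forall v, (sat v f <-> sat (mix K v e) (fmap iota g)).
Proof.
  set (K := max (fbnd f) 2). exists (fst (fabs K f)), K.
  exists (fun n => nth (n - K) (snd (fabs K f)) (s0 U)). split. lia. split. lia.
  intro v. symmetry. apply (fabs_ok f K K v _ (s0 U)); auto. lia.
  - intros n Hn. unfold mix. destruct (Nat.ltb_spec n K); auto. lia.
  - intros i Hi. unfold mix. destruct (Nat.ltb_spec (K + i) K). lia. f_equal. lia.
Qed.
End Abs.
Open Scope Z_scope.

Definition env := nat -> Z.
Definition aff (t : env -> Z) := forall x, exists c, forall (v : env) a, t (upd v x a) = c * a + t (upd v x 0).

Lemma aff_const c : aff (fun _ => c).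
Proof. intro x. exists 0. intros. lia. Qed.
Lemma aff_var n : aff (fun v => v n).
Proof. intro x. destruct (Nat.eq_dec x n) as [->|H].
- exists 1. intros. rewrite !upd_same. lia.
- exists 0. intros. rewrite !upd_other by auto. lia. Qed.
Lemma aff_add t1 t2 : aff t1 -> aff t2 -> aff (fun v => t1 v + t2 v).
Proof. intros H1 H2 x. destruct (H1 x) as [c1 Hc1]. destruct (H2 x) as [c2 Hc2].
 exists (c1 + c2). intros. rewrite Hc1, Hc2. lia. Qed.
Lemma aff_scale k t : aff t -> aff (fun v => k * t v).
Proof. intros H x. destruct (H x) as [c Hc]. exists (k * c). intros. rewrite Hc. lia. Qed.
Lemma aff_sub0 x t : aff t -> aff (fun v => t (upd v x 0)).
Proof. intros H y. destruct (Nat.eq_dec y x) as [->|Hne].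
- exists 0. intros. rewrite !upd_upd. lia.
- destruct (H y) as [c Hc]. exists c. intros v a.
  rewrite (upd_comm v y x a 0) by auto. rewrite Hc. rewrite <- (upd_comm v y x 0 0) by auto. reflexivity. Qed.

Definition coef (t : env -> Z) (x : nat) : Z :=
  epsilon (inhabits 0) (fun c => forall (v : env) a, t (upd v x a) = c * a + t (upd v x 0)).
Lemma coef_spec t x : aff t -> forall (v : env) a, t (upd v x a) = coef t x * a + t (upd v x 0).
Proof. intro H. unfold coef. apply (epsilon_spec (inhabits 0) (fun c => forall (v : env) a, t (upd v x a) = c * a + t (upd v x 0))). apply H. Qed.

Inductive qf := QT | QF | QLt (t : env -> Z) | QDv (m : Z) (t : env -> Z) | QNDv (m : Z) (t : env -> Z)
 | QAnd (p q : qf) | QOr (p q : qf).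

Fixpoint ev (p : qf) (v : env) : Prop :=
  match p with
  | QT => True | QF => False | QLt t => t v < 0 | QDv m t => (m | t v) | QNDv m t => ~ (m | t v)
  | QAnd p q => ev p v /\ ev q v | QOr p q => ev p v \/ ev q v end.

Fixpoint wf (p : qf) : Prop :=
  match p with
  | QT | QF => True | QLt t => aff t | QDv m t | QNDv m t => m <> 0 /\ aff t
  | QAnd p q | QOr p q => wf p /\ wf q end.

Fixpoint qneg (p : qf) : qf :=
  match p with
  | QT => QF | QF => QT | QLt t => QLt (fun v => - t v - 1) | QDv m t => QNDv m t | QNDv m t => QDv m t
  | QAnd p q => QOr (qneg p) (qneg q) | QOr p q => QAnd (qneg p) (qneg q) end.

Lemma qneg_ok p v : ev (qneg p) v <-> ~ ev p v.
Proof. induction p; simpl.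
- tauto.
- tauto.
- lia.
- tauto.
- split; intro H. intro H'; tauto. apply NNPP; auto.
- rewrite IHp1, IHp2. split. intros [H|H] [? ?]; tauto. intro H. apply not_and_or in H. auto.
- rewrite IHp1, IHp2. tauto. Qed.
Lemma qneg_wf p : wf p -> wf (qneg p).
Proof. induction p; simpl; try solve [tauto].
- intro H. apply (aff_add (fun v => - t v) (fun _ => -1)); [|apply aff_const].
  intro x. destruct (H x) as [c Hc]. exists (- c). intros. rewrite Hc. lia. Qed.

Fixpoint dlt (p : qf) : Z :=
  match p with QDv m _ | QNDv m _ => Z.abs m | QAnd p q | QOr p q => dlt p * dlt q | _ => 1 end.
Lemma dlt_pos p : wf p -> 0 < dlt p.
Proof. induction p; simpl; intros; try lia; destruct H; apply Z.mul_pos_pos; auto. Qed.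

Lemma mL1 c a : c <= -1 -> 0 <= a -> c*a <= -a. Proof. intros. nia. Qed.
Lemma mL2 c a : c >= 1 -> 0 <= a -> c*a >= a. Proof. intros. nia. Qed.
Lemma mL3 c a : c <= -1 -> a <= 0 -> c*a >= -a. Proof. intros. nia. Qed.
Lemma mL4 c a : c >= 1 -> a <= 0 -> c*a <= a. Proof. intros. nia. Qed.

Lemma qper p : wf p -> forall y D, (dlt p | D) -> forall v : env, exists b, 0 <= b /\
  forall a a', ((b < a /\ b < a') \/ (a < -b /\ a' < -b)) -> (D | a' - a) ->
     (ev p (upd v y a) <-> ev p (upd v y a')).
Proof. induction p; simpl; intros Hw y D HD v.
- exists 0. split. lia. tauto.
- exists 0. split. lia. tauto.
- pose proof (coef_spec t y Hw v) as Hc. revert Hc. generalize (coef t y) (t (upd v y 0)). intros c r Hc.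
  exists (Z.abs r). split. lia. intros a a' Ha _. rewrite !Hc.
  destruct (Z.lt_trichotomy c 0) as [Hn|[H0|Hp]].
  + destruct Ha as [[]|[]].
    * pose proof (mL1 c a ltac:(lia) ltac:(lia)). pose proof (mL1 c a' ltac:(lia) ltac:(lia)). split; intro; lia.
    * pose proof (mL3 c a ltac:(lia) ltac:(lia)). pose proof (mL3 c a' ltac:(lia) ltac:(lia)). split; intro; lia.
  + rewrite H0. split; intro; lia.
  + destruct Ha as [[]|[]].
    * pose proof (mL2 c a ltac:(lia) ltac:(lia)). pose proof (mL2 c a' ltac:(lia) ltac:(lia)). split; intro; lia.
    * pose proof (mL4 c a ltac:(lia) ltac:(lia)). pose proof (mL4 c a' ltac:(lia) ltac:(lia)). split; intro; lia.
- destruct Hw as [Hm Hw]. pose proof (coef_spec t y Hw v) as Hc.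
  exists 0. split. lia. intros a a' _ Hd. rewrite (Hc a), (Hc a').
  assert (Hmd : (m | D)) by (apply Z.divide_abs_l; auto).
  assert (Hx : (m | coef t y * (a' - a))) by (apply Z.divide_mul_r; eapply Z.divide_trans; eauto).
  replace (coef t y * a' + t (upd v y 0)) with ((coef t y * a + t (upd v y 0)) + coef t y * (a' - a)) by ring.
  revert Hx. generalize (coef t y * a + t (upd v y 0)) as X. intros X Hx.
  split; intro H. apply Z.divide_add_r; auto.
  replace X with ((X + coef t y * (a' - a)) - coef t y * (a' - a)) by ring. apply Z.divide_sub_r; auto.
- destruct Hw as [Hm Hw]. pose proof (coef_spec t y Hw v) as Hc.
  exists 0. split. lia. intros a a' _ Hd. rewrite (Hc a), (Hc a').
  assert (Hmd : (m | D)) by (apply Z.divide_abs_l; auto).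
  assert (Hx : (m | coef t y * (a' - a))) by (apply Z.divide_mul_r; eapply Z.divide_trans; eauto).
  replace (coef t y * a' + t (upd v y 0)) with ((coef t y * a + t (upd v y 0)) + coef t y * (a' - a)) by ring.
  revert Hx. generalize (coef t y * a + t (upd v y 0)) as X. intros X Hx.
  split; intros H H'; apply H.
  replace X with ((X + coef t y * (a' - a)) - coef t y * (a' - a)) by ring. apply Z.divide_sub_r; auto.
  apply Z.divide_add_r; auto.
- destruct Hw as [Hw1 Hw2].
  destruct (IHp1 Hw1 y D ltac:(eapply Z.divide_trans; [apply Z.divide_factor_l|exact HD]) v) as [b1 [Hb1 H1]].
  destruct (IHp2 Hw2 y D ltac:(eapply Z.divide_trans; [apply Z.divide_factor_r|exact HD]) v) as [b2 [Hb2 H2]].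
  exists (Z.max b1 b2). split. lia. intros a a' Ha Hd.
  rewrite (H1 a a'), (H2 a a'); auto; try tauto; lia.
- destruct Hw as [Hw1 Hw2].
  destruct (IHp1 Hw1 y D ltac:(eapply Z.divide_trans; [apply Z.divide_factor_l|exact HD]) v) as [b1 [Hb1 H1]].
  destruct (IHp2 Hw2 y D ltac:(eapply Z.divide_trans; [apply Z.divide_factor_r|exact HD]) v) as [b2 [Hb2 H2]].
  exists (Z.max b1 b2). split. lia. intros a a' Ha Hd.
  rewrite (H1 a a'), (H2 a a'); auto; try tauto; lia.
Qed.
Open Scope Z_scope.

Inductive cf := CT | CF | CLt (s : Z) (r : env -> Z) | CDv (m s : Z) (r : env -> Z) | CNDv (m s : Z) (r : env -> Z)
 | CAnd (p q : cf) | COr (p q : cf).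

Fixpoint cev (p : cf) (v : env) (a : Z) : Prop :=
  match p with
  | CT => True | CF => False | CLt s r => s * a + r v < 0
  | CDv m s r => (m | s * a + r v) | CNDv m s r => ~ (m | s * a + r v)
  | CAnd p q => cev p v a /\ cev q v a | COr p q => cev p v a \/ cev q v a end.

Fixpoint cwf (p : cf) : Prop :=
  match p with
  | CT | CF => True | CLt s r => aff r /\ -1 <= s <= 1
  | CDv m s r | CNDv m s r => m <> 0 /\ aff r
  | CAnd p q | COr p q => cwf p /\ cwf q end.

Fixpoint cdlt (p : cf) : Z :=
  match p with CDv m _ _ | CNDv m _ _ => Z.abs m | CAnd p q | COr p q => cdlt p * cdlt q | _ => 1 end.

Lemma cdlt_pos p : cwf p -> 0 < cdlt p.
Proof. induction p; simpl; intros; try lia; destruct H; apply Z.mul_pos_pos; auto. Qed.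

Fixpoint minf (p : cf) : cf :=
  match p with
  | CLt s r => if 0 <? s then CT else if s <? 0 then CF else CLt 0 r
  | CAnd p q => CAnd (minf p) (minf q) | COr p q => COr (minf p) (minf q)
  | p => p end.

Fixpoint Bset (p : cf) : list (env -> Z) :=
  match p with
  | CLt s r => if s =? -1 then r :: nil else nil
  | CAnd p q | COr p q => Bset p ++ Bset q
  | _ => nil end.

Lemma divsub m D a k : (m | D) -> ((m | a) <-> (m | a + k * D)).
Proof. intro H. split; intro H'.
- apply Z.divide_add_r; auto. apply Z.divide_mul_r; auto.
- replace a with ((a + k * D) - k * D) by ring. apply Z.divide_sub_r; auto. apply Z.divide_mul_r; auto. Qed.

Lemma K1 p : cwf p -> forall v, exists z, forall a, a < z -> (cev p v a <-> cev (minf p) v a).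
Proof. induction p; simpl; intros Hw v.
- exists 0; tauto.
- exists 0; tauto.
- destruct Hw as [_ Hs]. exists (- Z.abs (r v)). intros a Ha.
  destruct (Z.ltb_spec 0 s); [|destruct (Z.ltb_spec s 0)]; simpl.
  + assert (s = 1) by lia. subst. split; intros; lia.
  + assert (s = -1) by lia. subst. split; intros; lia.
  + assert (s = 0) by lia. subst. tauto.
- exists 0; tauto.
- exists 0; tauto.
- destruct Hw as [H1 H2]. destruct (IHp1 H1 v) as [z1 Hz1]. destruct (IHp2 H2 v) as [z2 Hz2].
  exists (Z.min z1 z2). intros a Ha. rewrite Hz1, Hz2 by lia. tauto.
- destruct Hw as [H1 H2]. destruct (IHp1 H1 v) as [z1 Hz1]. destruct (IHp2 H2 v) as [z2 Hz2].
  exists (Z.min z1 z2). intros a Ha. rewrite Hz1, Hz2 by lia. tauto.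
Qed.

Lemma K2 p : forall D, (cdlt p | D) -> forall v a k, cev (minf p) v a <-> cev (minf p) v (a + k * D).
Proof. induction p; simpl; intros D HD v a k.
- tauto.
- tauto.
- destruct (Z.ltb_spec 0 s); [|destruct (Z.ltb_spec s 0)]; simpl; try tauto; split; intro; lia.
- rewrite Z.divide_abs_l in HD. replace (s * (a + k * D) + r v) with ((s * a + r v) + (s * k) * D) by ring.
  apply divsub; auto.
- rewrite Z.divide_abs_l in HD. replace (s * (a + k * D) + r v) with ((s * a + r v) + (s * k) * D) by ring.
  rewrite <- divsub; auto. tauto.
- assert (H1 : (cdlt p1 | D)) by (eapply Z.divide_trans; [apply Z.divide_factor_l|exact HD]).
  assert (H2 : (cdlt p2 | D)) by (eapply Z.divide_trans; [apply Z.divide_factor_r|exact HD]).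
  rewrite (IHp1 D H1 v a k), (IHp2 D H2 v a k). tauto.
- assert (H1 : (cdlt p1 | D)) by (eapply Z.divide_trans; [apply Z.divide_factor_l|exact HD]).
  assert (H2 : (cdlt p2 | D)) by (eapply Z.divide_trans; [apply Z.divide_factor_r|exact HD]).
  rewrite (IHp1 D H1 v a k), (IHp2 D H2 v a k). tauto.
Qed.

Lemma K3 p : cwf p -> forall D, 0 < D -> (cdlt p | D) -> forall v a,
  (forall b, In b (Bset p) -> forall j, 1 <= j <= D -> a <> b v + j) -> cev p v a -> cev p v (a - D).
Proof. induction p; simpl; intros Hw D HDp HD v a Hb Hc; auto.
- destruct Hw as [_ Hs]. destruct (Z.eqb_spec s (-1)).
  + subst. simpl in Hb. destruct (Z.le_gt_cases (a - r v) D).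
    * exfalso. apply (Hb r (or_introl eq_refl) (a - r v)). lia. lia.
    * lia.
  + assert (s = 0 \/ s = 1) as [-> | ->] by lia; lia.
- rewrite Z.divide_abs_l in HD. replace (s * (a - D) + r v) with ((s * a + r v) + (- s) * D) by ring.
  apply divsub; auto.
- rewrite Z.divide_abs_l in HD. replace (s * (a - D) + r v) with ((s * a + r v) + (- s) * D) by ring.
  rewrite <- divsub; auto.
- destruct Hw as [H1 H2]. destruct Hc as [Hc1 Hc2]. split.
  + apply IHp1; auto. eapply Z.divide_trans; [apply Z.divide_factor_l|exact HD].
    intros b Hb' j Hj. apply Hb; auto. apply in_or_app; auto.
  + apply IHp2; auto. eapply Z.divide_trans; [apply Z.divide_factor_r|exact HD].
    intros b Hb' j Hj. apply Hb; auto. apply in_or_app; auto.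
- destruct Hw as [H1 H2]. destruct Hc as [Hc1|Hc2].
  + left. apply IHp1; auto. eapply Z.divide_trans; [apply Z.divide_factor_l|exact HD].
    intros b Hb' j Hj. apply Hb; auto. apply in_or_app; auto.
  + right. apply IHp2; auto. eapply Z.divide_trans; [apply Z.divide_factor_r|exact HD].
    intros b Hb' j Hj. apply Hb; auto. apply in_or_app; auto.
Qed.

Lemma cooper p : cwf p -> forall v, (exists a, cev p v a) <->
  exists j, 1 <= j <= cdlt p /\ (cev (minf p) v j \/ exists b, In b (Bset p) /\ cev p v (b v + j)).
Proof. intros Hw v. pose proof (cdlt_pos p Hw) as HDp. set (D := cdlt p) in *.
  assert (HD : (cdlt p | D)) by (apply Z.divide_refl).
  destruct (K1 p Hw v) as [z Hz].
  split.
  - intros [a Ha].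
    destruct (classic (forall n : nat, cev p v (a - Z.of_nat n * D))) as [Hall|Hex].
    + exists ((a - 1) mod D + 1). split. pose proof (Z.mod_pos_bound (a - 1) D HDp). lia.
      left. assert (Hn : exists n : nat, a - Z.of_nat n * D < z).
      { exists (Z.to_nat (Z.abs a + Z.abs z + 1)). rewrite Z2Nat.id by lia. nia. }
      destruct Hn as [n Hn].
      specialize (Hall n). rewrite Hz in Hall by exact Hn.
      rewrite (K2 p D HD v _ ((a - 1) / D - Z.of_nat n)).
      replace ((a - 1) mod D + 1 + ((a - 1) / D - Z.of_nat n) * D) with (a - Z.of_nat n * D); auto.
      pose proof (Z.div_mod (a - 1) D ltac:(lia)). lia.
    + apply not_all_ex_not in Hex.
      assert (Hk : exists n : nat, cev p v (a - Z.of_nat n * D) /\ ~ cev p v (a - Z.of_nat (S n) * D)).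
      { destruct Hex as [n Hn]. apply NNPP. intro Hno. apply Hn. clear Hn. induction n.
        - replace (a - Z.of_nat 0 * D) with a by lia. auto.
        - apply NNPP. intro H'. apply Hno. exists n. auto. }
      destruct Hk as [n [Hn1 Hn2]].
      apply NNPP. intro Hno. apply Hn2.
      replace (a - Z.of_nat (S n) * D) with ((a - Z.of_nat n * D) - D) by lia.
      apply K3; auto. intros b Hb j Hj Heq. apply Hno. exists j. split. lia. right. exists b. split; auto.
      rewrite <- Heq. auto.
  - intros [j [Hj [Hm|[b [Hb Hc]]]]].
    + exists (j + (- (Z.abs j + Z.abs z + 1)) * D).
      rewrite Hz. apply K2; auto. nia.
    + exists (b v + j). auto.
Qed.
Open Scope Z_scope.

Definition kf (M c : Z) : Z := if c =? 0 then 1 else M / Z.abs c.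
Definition lcc (c : Z) : Z := if c =? 0 then 1 else Z.abs c.

Lemma katom M c a r : 0 < M -> (lcc c | M) ->
  0 < kf M c /\ Z.sgn c * (M * a) + kf M c * r = kf M c * (c * a + r).
Proof. intros HM Hd. unfold kf, lcc in *. destruct (Z.eqb_spec c 0).
- subst. simpl. lia.
- destruct Hd as [q Hq]. rewrite Hq. rewrite Z.div_mul by lia.
  destruct (Z.lt_trichotomy c 0) as [Hn|[H0|Hp]]; [|lia|].
  + rewrite Z.sgn_neg by auto. rewrite Z.abs_neq in * by lia. split. nia. ring.
  + rewrite Z.sgn_pos by auto. rewrite Z.abs_eq in * by lia. split. nia. ring.
Qed.

Lemma sgn_bnd c : -1 <= Z.sgn c <= 1.
Proof. destruct (Z.lt_trichotomy c 0) as [Hn|[H0|Hp]].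
 rewrite Z.sgn_neg; lia. subst; simpl; lia. rewrite Z.sgn_pos; lia. Qed.

Fixpoint lc (x : nat) (p : qf) : Z :=
  match p with
  | QLt t | QDv _ t | QNDv _ t => lcc (coef t x)
  | QAnd p q | QOr p q => lc x p * lc x q
  | _ => 1 end.

Lemma lc_pos x p : 0 < lc x p.
Proof. induction p; simpl; try lia; try (apply Z.mul_pos_pos; auto);
  unfold lcc; destruct (Z.eqb_spec (coef t x) 0); lia. Qed.

Fixpoint resc (x : nat) (M : Z) (p : qf) : cf :=
  match p with
  | QT => CT | QF => CF
  | QLt t => CLt (Z.sgn (coef t x)) (fun v => kf M (coef t x) * t (upd v x 0))
  | QDv m t => CDv (kf M (coef t x) * m) (Z.sgn (coef t x)) (fun v => kf M (coef t x) * t (upd v x 0))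
  | QNDv m t => CNDv (kf M (coef t x) * m) (Z.sgn (coef t x)) (fun v => kf M (coef t x) * t (upd v x 0))
  | QAnd p q => CAnd (resc x M p) (resc x M q)
  | QOr p q => COr (resc x M p) (resc x M q) end.

Lemma posmul k z : 0 < k -> (k * z < 0 <-> z < 0).
Proof. intros. split; intros; nia. Qed.

Lemma resc_ok x p : wf p -> forall M, 0 < M -> (lc x p | M) ->
  forall v a, cev (resc x M p) v (M * a) <-> ev p (upd v x a).
Proof. induction p; simpl; intros Hw M HM Hd v a.
- tauto.
- tauto.
- destruct (katom M (coef t x) a (t (upd v x 0)) HM Hd) as [Hk Heq].
  rewrite Heq, (coef_spec t x Hw v a). apply posmul; auto.
- destruct Hw as [Hm Hw].
  destruct (katom M (coef t x) a (t (upd v x 0)) HM Hd) as [Hk Heq].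
  rewrite Heq, (coef_spec t x Hw v a). apply Z.mul_divide_cancel_l. lia.
- destruct Hw as [Hm Hw].
  destruct (katom M (coef t x) a (t (upd v x 0)) HM Hd) as [Hk Heq].
  rewrite Heq, (coef_spec t x Hw v a). rewrite Z.mul_divide_cancel_l by lia. tauto.
- destruct Hw as [H1 H2].
  rewrite IHp1, IHp2; auto; try tauto.
  eapply Z.divide_trans; [apply Z.divide_factor_r|exact Hd].
  eapply Z.divide_trans; [apply Z.divide_factor_l|exact Hd].
- destruct Hw as [H1 H2].
  rewrite IHp1, IHp2; auto; try tauto.
  eapply Z.divide_trans; [apply Z.divide_factor_r|exact Hd].
  eapply Z.divide_trans; [apply Z.divide_factor_l|exact Hd].
Qed.

Lemma resc_wf x p : wf p -> forall M, 0 < M -> (lc x p | M) -> cwf (resc x M p).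
Proof. induction p; simpl; intros Hw M HM Hd; auto.
- split. apply aff_scale, aff_sub0; auto. apply sgn_bnd.
- destruct Hw as [Hm Hw]. destruct (katom M (coef t x) 0 0 HM Hd) as [Hk _].
  split. nia. apply aff_scale, aff_sub0; auto.
- destruct Hw as [Hm Hw]. destruct (katom M (coef t x) 0 0 HM Hd) as [Hk _].
  split. nia. apply aff_scale, aff_sub0; auto.
- destruct Hw as [H1 H2]. split; [apply IHp1|apply IHp2]; auto.
  eapply Z.divide_trans; [apply Z.divide_factor_l|exact Hd].
  eapply Z.divide_trans; [apply Z.divide_factor_r|exact Hd].
- destruct Hw as [H1 H2]. split; [apply IHp1|apply IHp2]; auto.
  eapply Z.divide_trans; [apply Z.divide_factor_l|exact Hd].
  eapply Z.divide_trans; [apply Z.divide_factor_r|exact Hd].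
Qed.

Fixpoint csub (p : cf) (b : env -> Z) (j : Z) : qf :=
  match p with
  | CT => QT | CF => QF
  | CLt s r => QLt (fun v => s * (b v + j) + r v)
  | CDv m s r => QDv m (fun v => s * (b v + j) + r v)
  | CNDv m s r => QNDv m (fun v => s * (b v + j) + r v)
  | CAnd p q => QAnd (csub p b j) (csub q b j)
  | COr p q => QOr (csub p b j) (csub q b j) end.

Lemma csub_ok p b j v : ev (csub p b j) v <-> cev p v (b v + j).
Proof. induction p; simpl; try rewrite IHp1, IHp2; tauto. Qed.

Lemma aff_lin s b j r : aff b -> aff r -> aff (fun v => s * (b v + j) + r v).
Proof. intros Hb Hr. apply aff_add; auto.
  apply aff_scale. apply (aff_add b (fun _ => j)); auto. apply aff_const. Qed.

Lemma csub_wf p b j : cwf p -> aff b -> wf (csub p b j).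
Proof. induction p; simpl; intros Hw Hb; try tauto.
- apply aff_lin; tauto.
- split. tauto. apply aff_lin; tauto.
- split. tauto. apply aff_lin; tauto.
Qed.

Lemma minf_cwf p : cwf p -> cwf (minf p).
Proof. induction p; simpl; try tauto.
 intros [Ha Hs]. destruct (0 <? s); simpl; auto. destruct (s <? 0); simpl; auto. split; auto; lia. Qed.

Lemma Bset_aff p : cwf p -> forall b, In b (Bset p) -> aff b.
Proof. induction p; simpl; intros Hw b Hb; try tauto.
- destruct (s =? -1); simpl in Hb; [destruct Hb as [<-|[]]|destruct Hb]. tauto.
- apply in_app_or in Hb. destruct Hb; [apply IHp1|apply IHp2]; tauto.
- apply in_app_or in Hb. destruct Hb; [apply IHp1|apply IHp2]; tauto.
Qed.

Definition qbig (l : list qf) : qf := fold_right QOr QF l.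
Lemma qbig_ok l v : ev (qbig l) v <-> exists q, In q l /\ ev q v.
Proof. induction l; simpl. split. tauto. intros [? [[] _]].
 rewrite IHl. split. intros [H|[q [H1 H2]]]; eauto. intros [q [[<-|H1] H2]]; eauto. Qed.
Lemma qbig_wf l : (forall q, In q l -> wf q) -> wf (qbig l).
Proof. induction l; simpl; auto. Qed.

Definition jlist (D : Z) : list Z := map (fun i => Z.of_nat i + 1) (seq 0 (Z.to_nat D)).
Lemma jlist_in D j : 0 <= D -> (In j (jlist D) <-> 1 <= j <= D).
Proof. intro HD. unfold jlist. rewrite in_map_iff. split.
- intros [i [<- Hi]]. apply in_seq in Hi. lia.
- intro Hj. exists (Z.to_nat (j - 1)). split. lia. apply in_seq. lia. Qed.

Lemma qelim p x : wf p -> exists P, wf P /\ forall v, (exists a, ev p (upd v x a)) <-> ev P v.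
Proof. intro Hw. set (M := lc x p). assert (HM : 0 < M) by apply lc_pos.
  assert (HdM : (lc x p | M)) by apply Z.divide_refl. clearbody M.
  set (psi := CAnd (CDv M 1 (fun _ => 0)) (resc x M p)).
  assert (Hpsi : cwf psi). { simpl. split. split. lia. apply aff_const. apply resc_wf; auto. }
  assert (Hequiv : forall v, (exists a, ev p (upd v x a)) <-> exists a, cev psi v a).
  { intro v. unfold psi. cbn [cev]. split.
    - intros [a Ha]. exists (M * a). split. exists a. cbv beta. lia. apply resc_ok; auto.
    - intros [a [[q Hq] Ha]]. exists q. replace a with (M * q) in Ha by lia.
      rewrite <- resc_ok; eauto. }
  exists (qbig (map (fun j => QOr (csub (minf psi) (fun _ => 0) j) (qbig (map (fun b => csub psi b j) (Bset psi)))) (jlist (cdlt psi)))).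
  split.
  - apply qbig_wf. intros q Hq. apply in_map_iff in Hq. destruct Hq as [j [<- _]]. cbn [wf]. split.
    apply csub_wf. apply minf_cwf; auto. apply aff_const.
    apply qbig_wf. intros q Hq. apply in_map_iff in Hq. destruct Hq as [b [<- Hb]].
    apply csub_wf; auto. eapply Bset_aff; eauto.
  - intro v. rewrite Hequiv, cooper by auto. rewrite qbig_ok. split.
    + intros [j [Hj H]]. exists (QOr (csub (minf psi) (fun _ => 0) j) (qbig (map (fun b => csub psi b j) (Bset psi)))).
      split. apply in_map_iff. exists j. split; auto. apply jlist_in. pose proof (cdlt_pos psi Hpsi). lia. auto.
      cbn [ev]. rewrite csub_ok, qbig_ok. destruct H as [H|[b [Hb Hc]]].
      * left. cbv beta. rewrite Z.add_0_l. exact H.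
      * right. exists (csub psi b j). split. apply in_map_iff. eauto. rewrite csub_ok. auto.
    + intros [q [Hq Hev]]. apply in_map_iff in Hq. destruct Hq as [j [<- Hj]].
      apply jlist_in in Hj; [|pose proof (cdlt_pos psi Hpsi); lia].
      exists j. split; auto. cbn [ev] in Hev. rewrite csub_ok, qbig_ok in Hev. destruct Hev as [H|[q [Hq H]]].
      * left. cbv beta in H. rewrite Z.add_0_l in H. exact H.
      * right. apply in_map_iff in Hq. destruct Hq as [b [<- Hb]]. rewrite csub_ok in H. eauto.
Qed.

Lemma aff_teval (t : term Zstruct) : aff (fun v => @teval Zstruct v t).
Proof. induction t; simpl.
- apply aff_var.
- apply aff_const.
- apply aff_const.
- apply (aff_add (fun v => @teval Zstruct v t1) (fun v => @teval Zstruct v t2)); auto. Qed.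

Theorem QE (f : form Zstruct) : exists p, wf p /\ forall v : env, @sat Zstruct v f <-> ev p v.
Proof. induction f.
- exists (QAnd (QLt (fun v => @teval Zstruct v t1 - @teval Zstruct v t2 - 1)) (QLt (fun v => @teval Zstruct v t2 - @teval Zstruct v t1 - 1))).
  split. simpl. split.
  + apply (aff_add (fun v => @teval Zstruct v t1 - @teval Zstruct v t2) (fun _ => -1)); [|apply aff_const].
    apply (aff_add (fun v => @teval Zstruct v t1) (fun v => - @teval Zstruct v t2)). apply aff_teval.
    apply (aff_scale (-1) (fun v => @teval Zstruct v t2)) ; apply aff_teval.
  + apply (aff_add (fun v => @teval Zstruct v t2 - @teval Zstruct v t1) (fun _ => -1)); [|apply aff_const].
    apply (aff_add (fun v => @teval Zstruct v t2) (fun v => - @teval Zstruct v t1)). apply aff_teval.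
    apply (aff_scale (-1) (fun v => @teval Zstruct v t1)) ; apply aff_teval.
  + intro v. simpl. lia.
- exists (QLt (fun v => @teval Zstruct v t1 - @teval Zstruct v t2)). split.
  + simpl. apply (aff_add (fun v => @teval Zstruct v t1) (fun v => - @teval Zstruct v t2)). apply aff_teval.
    apply (aff_scale (-1) (fun v => @teval Zstruct v t2)) ; apply aff_teval.
  + intro v. simpl. lia.
- exists QF. simpl. tauto.
- destruct IHf as [p [Hw Hp]]. exists (qneg p). split. apply qneg_wf; auto.
  intro v. rewrite qneg_ok. simpl. rewrite Hp. tauto.
- destruct IHf1 as [p [Hw Hp]]. destruct IHf2 as [q [Hwq Hq]]. exists (QAnd p q). simpl. split; auto.
  intro v. rewrite Hp, Hq. tauto.
- destruct IHf as [p [Hw Hp]]. destruct (qelim p n Hw) as [P [HP HPe]]. exists P. split; auto.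
  intro v. rewrite <- HPe. simpl. split; intros [a Ha]; exists a; apply Hp; auto.
Qed.

Theorem ZPer (f : form Zstruct) (y : nat) : exists N : nat, (0 < N)%nat /\
  forall v : env, exists b, 0 <= b /\ forall a a', ((b < a /\ b < a') \/ (a < -b /\ a' < -b)) ->
     (Z.of_nat N | a' - a) -> (@sat Zstruct (upd v y a) f <-> @sat Zstruct (upd v y a') f).
Proof. destruct (QE f) as [p [Hw Hp]]. exists (Z.to_nat (dlt p)). pose proof (dlt_pos p Hw).
  split. lia. intro v. destruct (qper p Hw y (dlt p) (Z.divide_refl _) v) as [b [Hb Hper]].
  exists b. split; auto. intros a a' Ha Hd. rewrite !Hp. apply Hper; auto. rewrite Z2Nat.id in Hd by lia. auto.
Qed.

Fixpoint tmul {P : Type} (N : nat) (t : term P) : term P :=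
  match N with O => tzero | S n => tadd t (tmul n t) end.
Fixpoint umul {M : structure} (N : nat) (q : M) : M :=
  match N with O => s0 M | S n => sadd M q (umul n q) end.

Lemma teval_tmul {M : structure} (v : nat -> M) N t : teval v (tmul N t) = umul N (teval v t).
Proof. induction N; simpl; congruence. Qed.
Lemma umulZ N (q : Z) : @umul Zstruct N q = (Z.of_nat N * q)%Z.
Proof. induction N. reflexivity. change (@umul Zstruct (S N) q) with (q + @umul Zstruct N q)%Z. rewrite IHN. lia. Qed.
Lemma tmap_tmul {P Q : Type} (i : P -> Q) N t : tmap i (tmul N t) = tmul N (tmap i t).
Proof. induction N; simpl; congruence. Qed.

Definition congF {P : Type} (c : P) (N z q : nat) : form P :=
  fex q (feq (tvar z) (tadd (tmul N (tvar q)) (tpar c))).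
Lemma fmap_congF {P Q : Type} (i : P -> Q) c N z q : fmap i (congF c N z q) = congF (i c) N z q.
Proof. unfold congF. simpl. rewrite tmap_tmul. reflexivity. Qed.
Lemma sat_congF {M : structure} (v : nat -> M) c N z q : q <> z ->
  (sat v (congF c N z q) <-> exists k, v z = sadd M (umul N k) c).
Proof. intro H. unfold congF. simpl. setoid_rewrite teval_tmul. simpl.
  split; intros [k Hk]; exists k; rewrite upd_same, upd_other in *; auto. Qed.

Definition beyond {M : structure} (sg : bool) (b a : M) : Prop := if sg then slt M b a else slt M a b.
Definition dirf {P : Type} (sg : bool) (t1 t2 : term P) : form P := if sg then flt t1 t2 else flt t2 t1.
Lemma fmap_dirf {P Q : Type} (i : P -> Q) sg t1 t2 : fmap i (dirf sg t1 t2) = dirf sg (tmap i t1) (tmap i t2).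
Proof. destruct sg; reflexivity. Qed.
Lemma sat_dirf {M : structure} (v : nat -> M) sg t1 t2 : sat v (dirf sg t1 t2) <-> beyond sg (teval v t1) (teval v t2).
Proof. destruct sg; reflexivity. Qed.

Definition gat {P : Type} (A : nat) (g : form P) : form P := fex 1 (fand (feq (tvar 1) (tvar A)) g).
Lemma fmap_gat {P Q : Type} (i : P -> Q) A g : fmap i (gat A g) = gat A (fmap i g).
Proof. reflexivity. Qed.
Lemma sat_gat {M : structure} (v : nat -> M) A g : A <> 1%nat -> (sat v (gat A g) <-> sat (upd v 1 (v A)) g).
Proof. intro H. unfold gat. simpl. split.
- intros [a [Ha Hg]]. rewrite upd_same, upd_other in Ha by auto. subst. auto.
- intro Hg. exists (v A). rewrite upd_same, upd_other by auto. auto. Qed.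

Fixpoint fbigAnd {P : Type} (n : nat) (F : nat -> form P) : form P :=
  match n with O => fneg fbot | S n => fand (fbigAnd n F) (F n) end.
Fixpoint fbigOr {P : Type} (n : nat) (F : nat -> form P) : form P :=
  match n with O => fbot | S n => fOr (fbigOr n F) (F n) end.
Lemma fmap_fbigAnd {P Q : Type} (i : P -> Q) n F : fmap i (fbigAnd n F) = fbigAnd n (fun j => fmap i (F j)).
Proof. induction n; simpl; congruence. Qed.
Lemma fmap_fbigOr {P Q : Type} (i : P -> Q) n F : fmap i (fbigOr n F) = fbigOr n (fun j => fmap i (F j)).
Proof. induction n; simpl; try rewrite IHn; reflexivity. Qed.
Lemma sat_fbigAnd {M : structure} (v : nat -> M) n F : sat v (fbigAnd n F) <-> forall j, (j < n)%nat -> sat v (F j).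
Proof. induction n; simpl. split; intros; [lia|tauto].
 rewrite IHn. split. intros [H1 H2] j Hj. destruct (Nat.eq_dec j n); subst; auto. apply H1; lia.
 intros H. split; auto. Qed.
Lemma sat_fbigOr {M : structure} (v : nat -> M) n F : sat v (fbigOr n F) <-> exists j, (j < n)%nat /\ sat v (F j).
Proof. induction n. simpl. split. tauto. intros [j [Hj _]]; lia.
 change (sat v (fOr (fbigOr n F) (F n)) <-> exists j, (j < S n)%nat /\ sat v (F j)).
 rewrite sat_fOr, IHn. split.
 - intros [[j [Hj H]]|H]. exists j; split; auto. exists n; split; auto.
 - intros [j [Hj H]]. destruct (Nat.eq_dec j n); subst; auto. left; exists j; split; auto; lia. Qed.

Lemma fmap_fall {P Q : Type} (i : P -> Q) n f : fmap i (fall n f) = fall n (fmap i f).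
Proof. reflexivity. Qed.
Lemma fmap_fimp {P Q : Type} (i : P -> Q) f g : fmap i (fimp f g) = fimp (fmap i f) (fmap i g).
Proof. reflexivity. Qed.
Lemma fmap_fiff {P Q : Type} (i : P -> Q) f g : fmap i (fiff f g) = fiff (fmap i f) (fmap i g).
Proof. reflexivity. Qed.
Lemma fmap_fand {P Q : Type} (i : P -> Q) f g : fmap i (fand f g) = fand (fmap i f) (fmap i g).
Proof. reflexivity. Qed.
Lemma fmap_fex {P Q : Type} (i : P -> Q) n f : fmap i (fex n f) = fex n (fmap i f).
Proof. reflexivity. Qed.
Lemma sat_fand {M : structure} (v : nat -> M) f g : sat v (fand f g) <-> sat v f /\ sat v g.
Proof. reflexivity. Qed.
Lemma sat_fex {M : structure} (v : nat -> M) n f : sat v (fex n f) <-> exists a, sat (upd v n a) f.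
Proof. reflexivity. Qed.
Local Open Scope nat_scope.

Lemma Zcls_uniq (N k k' j j' : Z) : (0 <= j < N)%Z -> (0 <= j' < N)%Z -> (N * k + j = N * k' + j')%Z -> j = j'.
Proof. intros H1 H2 H. assert (Hkk : k = k') by nia. subst. lia. Qed.

Section UF.
Variable U : structure.
Variable iota : Z -> U.
Hypothesis Hel : elementary_emb Zstruct U iota.

Definition congU (N j : nat) (a : U) : Prop := exists k, a = sadd U (umul N k) (iota (Z.of_nat j)).

Ltac zsimp := repeat first [rewrite sat_fimp | rewrite sat_fand | rewrite sat_dirf | rewrite sat_fex].

Lemma U0 sg (b c a : U) : beyond sg b c -> beyond sg c a -> beyond sg b a.
Proof.
  set (T := @fimp Zstruct (fand (dirf sg (tvar 0) (tvar 1)) (dirf sg (tvar 1) (tvar 2))) (dirf sg (tvar 0) (tvar 2))).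
  assert (HZ : forall v : nat -> Zstruct, sat v T).
  { intro v. unfold T. rewrite sat_fimp, sat_fand, !sat_dirf. destruct sg; simpl; lia. }
  pose proof (transfer U iota Hel T HZ (fun n => match n with 0 => b | 1 => c | _ => a end)) as H.
  unfold T in H. rewrite fmap_fimp, fmap_fand, !fmap_dirf, sat_fimp, sat_fand, !sat_dirf in H.
  simpl in H. tauto.
Qed.

Lemma U1 sg (b1 b2 : U) : exists c, beyond sg b1 c /\ beyond sg b2 c.
Proof.
  set (T := @fex Zstruct 2 (fand (dirf sg (tvar 0) (tvar 2)) (dirf sg (tvar 1) (tvar 2)))).
  assert (HZ : forall v : nat -> Zstruct, sat v T).
  { intro v. unfold T. rewrite sat_fex. setoid_rewrite sat_fand. setoid_rewrite sat_dirf.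
    destruct sg; simpl.
    - exists (Z.max (v 0%nat) (v 1%nat) + 1)%Z. rewrite upd_same, !upd_other by lia. simpl. lia.
    - exists (Z.min (v 0%nat) (v 1%nat) - 1)%Z. rewrite upd_same, !upd_other by lia. simpl. lia. }
  pose proof (transfer U iota Hel T HZ (fun n => match n with 0 => b1 | _ => b2 end)) as H.
  unfold T in H. rewrite fmap_fex, fmap_fand, !fmap_dirf, sat_fex in H. destruct H as [c Hc].
  rewrite sat_fand, !sat_dirf in Hc. simpl in Hc. exists c. exact Hc.
Qed.

Lemma U2 sg N j (b : U) : (0 < N)%nat -> exists a, beyond sg b a /\ congU N j a.
Proof. intro HN.
  set (T := @fex Zstruct 1 (fand (dirf sg (tvar 0) (tvar 1)) (congF (Z.of_nat j) N 1 2))).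
  assert (HZ : forall v : nat -> Zstruct, sat v T).
  { intro v. unfold T. rewrite sat_fex. setoid_rewrite sat_fand. setoid_rewrite sat_dirf.
    setoid_rewrite sat_congF; [|lia]. setoid_rewrite umulZ.
    destruct sg; simpl.
    - exists (Z.of_nat N * (Z.abs (v 0%nat) + 1) + Z.of_nat j)%Z. rewrite upd_same, !upd_other by lia. simpl. split. nia.
      exists (Z.abs (v 0%nat) + 1)%Z. reflexivity.
    - exists (Z.of_nat N * (- (Z.abs (v 0%nat) + Z.of_nat j + 1)) + Z.of_nat j)%Z. rewrite upd_same, !upd_other by lia. simpl. split. nia.
      eexists. reflexivity. }
  pose proof (transfer U iota Hel T HZ (fun n => b)) as H.
  unfold T in H. rewrite fmap_fex, fmap_fand, fmap_dirf, fmap_congF, sat_fex in H. destruct H as [a Ha].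
  rewrite sat_fand, sat_dirf, sat_congF in Ha by lia. simpl in Ha. rewrite upd_same in Ha. exists a. exact Ha.
Qed.

Lemma U3 N (a : U) : (0 < N)%nat -> exists j, (j < N)%nat /\ congU N j a.
Proof. intro HN.
  set (T := @fbigOr Zstruct N (fun j => congF (Z.of_nat j) N 0 1)).
  assert (HZ : forall v : nat -> Zstruct, sat v T).
  { intro v. unfold T. rewrite sat_fbigOr. exists (Z.to_nat (v 0%nat mod Z.of_nat N)).
    pose proof (Z.mod_pos_bound (v 0%nat) (Z.of_nat N) ltac:(lia)). split. lia.
    rewrite sat_congF by lia. exists (v 0%nat / Z.of_nat N)%Z. rewrite umulZ. simpl.
    rewrite Z2Nat.id by lia. apply Z.div_mod. lia. }
  pose proof (transfer U iota Hel T HZ (fun n => a)) as H.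
  unfold T in H. rewrite fmap_fbigOr, sat_fbigOr in H. destruct H as [j [Hj H]].
  rewrite fmap_congF, sat_congF in H by lia. exists j. split; auto.
Qed.

Lemma U4 N j j' (a : U) : (j < N)%nat -> (j' < N)%nat -> congU N j a -> congU N j' a -> j = j'.
Proof. intros Hj Hj' H1 H2. destruct (Nat.eq_dec j j') as [|Hne]; auto. exfalso.
  set (T := @fneg Zstruct (fand (congF (Z.of_nat j) N 0 1) (congF (Z.of_nat j') N 0 1))).
  assert (HZ : forall v : nat -> Zstruct, sat v T).
  { intro v. unfold T. change (~ sat v (fand (congF (Z.of_nat j) N 0 1) (congF (Z.of_nat j') N 0 1))). rewrite sat_fand, !sat_congF by lia. setoid_rewrite umulZ.
    intros [[k Hk] [k' Hk']]. simpl in Hk, Hk'. apply Hne.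
    apply Nat2Z.inj. apply (Zcls_uniq (Z.of_nat N) k k'); lia. }
  pose proof (transfer U iota Hel T HZ (fun n => a)) as H.
  unfold T in H. change (~ sat (fun _ : nat => a) (fmap iota (fand (congF (Z.of_nat j) N 0 1) (congF (Z.of_nat j') N 0 1)))) in H.
  apply H. rewrite fmap_fand, sat_fand, !fmap_congF, !sat_congF by lia. split; auto.
Qed.

Lemma U5 N k i (a : U) : (0 < N)%nat -> congU (N * k) i a -> congU N (i mod N) a.
Proof. intros HN Hc.
  set (T := @fimp Zstruct (congF (Z.of_nat i) (N * k) 0 1) (congF (Z.of_nat (i mod N)) N 0 1)).
  assert (HZ : forall v : nat -> Zstruct, sat v T).
  { intro v. unfold T. rewrite sat_fimp, !sat_congF by lia. setoid_rewrite umulZ. intros [q Hq]. simpl in *.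
    exists (Z.of_nat k * q + Z.of_nat i / Z.of_nat N)%Z. rewrite Hq. rewrite Nat2Z.inj_mod, Nat2Z.inj_mul.
    pose proof (Z.div_mod (Z.of_nat i) (Z.of_nat N) ltac:(lia)). lia. }
  pose proof (transfer U iota Hel T HZ (fun n => a)) as H.
  unfold T in H. rewrite fmap_fimp, sat_fimp, !fmap_congF, !sat_congF in H by lia. simpl in H. apply H, Hc.
Qed.

End UF.
Local Open Scope nat_scope.

Ltac updsimp := repeat (rewrite upd_same || rewrite upd_other by lia).
Ltac updsimp_in H := repeat (rewrite upd_same in H || rewrite upd_other in H by lia).

Section UP.
Variable U : structure.
Variable iota : Z -> U.
Hypothesis Hel : elementary_emb Zstruct U iota.

Definition validU sg N (f : form U) := forall v : nat -> U, exists b, forall j a a', j < N ->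
  beyond sg b a -> beyond sg b a' -> congU U iota N j a -> congU U iota N j a' ->
  (sat (upd v 1 a) f <-> sat (upd v 1 a') f).

Lemma mix_upd K (v e : nat -> U) a : 1 < K -> mix U K (upd v 1 a) e = upd (mix U K v e) 1 a.
Proof. intro H. apply functional_extensionality; intro n. unfold mix, upd.
  destruct (Nat.eqb_spec n 1); destruct (Nat.ltb_spec n K); subst; simpl; auto; lia. Qed.

Lemma Uper sg f : exists N, 0 < N /\ validU sg N f.
Proof.
  destruct (abstraction U iota f) as [g [K [e [Hfb [HK2 Habs]]]]].
  destruct (ZPer g 1) as [N [HN HZper]].
  exists N. split; auto.
  set (L := max K (fbnd g) + 1).
  assert (HL : K < L /\ fbnd g < L) by lia. clearbody L.
  assert (HL2 : @fbnd Z g < L) by exact (proj2 HL).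
  set (T := @fex Zstruct L (fbigAnd N (fun j => fall (L+1) (fall (L+2) (fimp
     (fand (dirf sg (tvar L) (tvar (L+1))) (fand (dirf sg (tvar L) (tvar (L+2)))
        (fand (congF (Z.of_nat j) N (L+1) (L+3)) (congF (Z.of_nat j) N (L+2) (L+3)))))
     (fiff (gat (L+1) g) (gat (L+2) g))))))).
  assert (HZ : forall v : nat -> Zstruct, sat v T).
  { intro v. destruct (HZper v) as [b0 [Hb0 Hper]]. unfold T. rewrite sat_fex.
    exists (if sg then b0 else (- b0)%Z). rewrite sat_fbigAnd. intros j Hj.
    rewrite sat_fall; intro a; rewrite sat_fall; intro a'.
    rewrite sat_fimp, !sat_fand, !sat_dirf, !sat_congF, sat_fiff, !sat_gat by lia.
    simpl. updsimp. intros [Ha [Ha' [[k Hk] [k' Hk']]]].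
    rewrite !umulZ in Hk, Hk'. simpl in Hk, Hk'.
    rewrite (sat_fresh g _ (upd v 1 a)), (sat_fresh g (upd _ 1 a') (upd v 1 a')).
    - apply Hper.
      + destruct sg; simpl in Ha, Ha'; lia.
      + exists (k' - k)%Z. lia.
    - intros n Hn. destruct (Nat.eq_dec n 1) as [->|Hn1]; updsimp; reflexivity.
    - intros n Hn. destruct (Nat.eq_dec n 1) as [->|Hn1]; updsimp; reflexivity. }
  intro v. pose proof (transfer U iota Hel T HZ (mix U K v e)) as H.
  unfold T in H. rewrite fmap_fex, sat_fex in H. destruct H as [b Hb]. exists b.
  rewrite fmap_fbigAnd, sat_fbigAnd in Hb.
  intros j a a' Hj Ha Ha' Hc Hc'. specialize (Hb j Hj).
  rewrite fmap_fall, sat_fall in Hb; specialize (Hb a). rewrite fmap_fall, sat_fall in Hb; specialize (Hb a').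
  rewrite fmap_fimp, sat_fimp, !fmap_fand, !sat_fand, !fmap_dirf, !sat_dirf, !fmap_congF, !sat_congF,
    fmap_fiff, sat_fiff, !fmap_gat, !sat_gat in Hb by lia.
  simpl in Hb. updsimp_in Hb.
  rewrite (Habs (upd v 1 a)), (Habs (upd v 1 a')), !mix_upd by lia.
  rewrite (sat_fresh (fmap iota g) (upd (mix U K v e) 1 a) (upd (upd (upd (upd (mix U K v e) L b) (L+1) a) (L+2) a') 1 a)).
  rewrite (sat_fresh (fmap iota g) (upd (mix U K v e) 1 a') (upd (upd (upd (upd (mix U K v e) L b) (L+1) a) (L+2) a') 1 a')).
  - apply Hb; repeat split; auto; first [exact Hc | exact Hc'].
  - intros n Hn. rewrite fbnd_map in Hn. destruct (Nat.eq_dec n 1) as [->|Hn1]; updsimp; reflexivity.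
  - intros n Hn. rewrite fbnd_map in Hn. destruct (Nat.eq_dec n 1) as [->|Hn1]; updsimp; reflexivity.
Qed.
End UP.
Local Open Scope nat_scope.

Fixpoint sumR (n : nat) (F : nat -> R) : R := match n with O => 0%R | S n => (sumR n F + F n)%R end.

Lemma sumR_ext n F G : (forall i, i < n -> F i = G i) -> sumR n F = sumR n G.
Proof. induction n; simpl; intros H; auto. rewrite IHn, H; auto. Qed.
Lemma sumR_add n F G : sumR n (fun i => F i + G i)%R = (sumR n F + sumR n G)%R.
Proof. induction n; simpl; [lra|rewrite IHn; lra]. Qed.
Lemma sumR_scale n c F : sumR n (fun i => c * F i)%R = (c * sumR n F)%R.
Proof. induction n; simpl; [lra|rewrite IHn; lra]. Qed.
Lemma sumR_scale_r n c F : sumR n (fun i => F i * c)%R = (sumR n F * c)%R.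
Proof. induction n; simpl; [lra|rewrite IHn; lra]. Qed.
Lemma sumR_nonneg (n : nat) (F : nat -> R) : (forall i, i < n -> (0 <= F i)%R) -> (0 <= sumR n F)%R.
Proof. induction n; simpl; intros H. lra. pose proof (H n ltac:(lia)). pose proof (IHn ltac:(intros; apply H; lia)). lra. Qed.
Lemma sumR_app (a b : nat) (F : nat -> R) : sumR (a + b) F = Rplus (sumR a F) (sumR b (fun i => F (a + i))).
Proof. induction b; simpl. rewrite Nat.add_0_r. lra. rewrite Nat.add_succ_r. simpl. rewrite IHb. lra. Qed.
Lemma sumR_swap k N (G : nat -> nat -> R) : sumR k (fun t => sumR N (G t)) = sumR N (fun j => sumR k (fun t => G t j)).
Proof. induction k; simpl. induction N; simpl; [lra|rewrite <- IHN; lra].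
 rewrite IHk. rewrite <- sumR_add. reflexivity. Qed.
Lemma sumR_block N k F : sumR (N * k) F = sumR N (fun j => sumR k (fun t => F (j + t * N))).
Proof. rewrite <- sumR_swap. induction k; simpl. rewrite Nat.mul_0_r. reflexivity.
 rewrite Nat.mul_succ_r, sumR_app, IHk. f_equal. apply sumR_ext. intros i Hi. f_equal. lia. Qed.
Lemma sumR_delta (N j : nat) (F : nat -> R) : j < N -> sumR N (fun i => Rmult (F i) (if Nat.eqb i j then 1%R else 0%R)) = F j.
Proof. intro Hj. induction N; simpl. lia. destruct (Nat.eqb_spec N j).
 - subst. rewrite (sumR_ext _ _ (fun _ => 0%R)). clear. induction j; simpl; lra.
   intros i Hi. destruct (Nat.eqb_spec i j); [lia|lra].
 - rewrite IHN by lia. lra. Qed.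

Section Meas.
Context {U : structure}.
Variable C : U -> Prop.
Variable S : nat -> Prop.
Variable m : form U -> R.
Hypothesis Hk : keisler C S m.

Lemma fi_and f g : formula_in C S f -> formula_in C S g -> formula_in C S (fand f g).
Proof. unfold formula_in. simpl. tauto. Qed.
Lemma fi_neg f : formula_in C S f -> formula_in C S (fneg f).
Proof. unfold formula_in. simpl. tauto. Qed.
Lemma fi_or f g : formula_in C S f -> formula_in C S g -> formula_in C S (fOr f g).
Proof. unfold formula_in, fOr. simpl. tauto. Qed.
Lemma fi_bot : formula_in C S fbot.
Proof. unfold formula_in. simpl. tauto. Qed.

Lemma k_inv f g : formula_in C S f -> formula_in C S g -> (forall v, sat v f <-> sat v g) -> m f = m g.
Proof. destruct Hk as [H _]. intros; apply H; auto. Qed.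
Lemma k_nn f : formula_in C S f -> (0 <= m f)%R.
Proof. destruct Hk as [_ [H _]]. auto. Qed.
Lemma k_one f : formula_in C S f -> (forall v, sat v f) -> m f = 1%R.
Proof. destruct Hk as [_ [_ [H _]]]. auto. Qed.
Lemma k_add f g : formula_in C S f -> formula_in C S g -> (forall v, ~ (sat v f /\ sat v g)) -> m (fOr f g) = (m f + m g)%R.
Proof. destruct Hk as [_ [_ [_ H]]]. auto. Qed.

Lemma k_compl f : formula_in C S f -> (m f + m (fneg f) = 1)%R.
Proof. intro Hf. rewrite <- k_add; auto using fi_neg. apply k_one. apply fi_or; auto using fi_neg.
 intro v. rewrite sat_fOr. simpl. tauto. intros v H. simpl in H. tauto. Qed.
Lemma k_unsat f : formula_in C S f -> (forall v, ~ sat v f) -> m f = 0%R.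
Proof. intros Hf H. pose proof (k_compl f Hf). rewrite (k_one (fneg f)) in H0; auto using fi_neg. lra. Qed.
Lemma k_split h g : formula_in C S h -> formula_in C S g -> m h = (m (fand h g) + m (fand h (fneg g)))%R.
Proof. intros Hh Hg. rewrite <- k_add; auto using fi_and, fi_neg.
 apply k_inv; auto using fi_or, fi_and, fi_neg. intro v. rewrite sat_fOr. simpl. tauto.
 intros v H. simpl in H. tauto. Qed.
Lemma k_le1 f : formula_in C S f -> (m f <= 1)%R.
Proof. intro Hf. pose proof (k_compl f Hf). pose proof (k_nn (fneg f) (fi_neg f Hf)). lra. Qed.
Lemma k_mono f g : formula_in C S f -> formula_in C S g -> (forall v, sat v f -> sat v g) -> (m f <= m g)%R.
Proof. intros Hf Hg H. rewrite (k_split g f Hg Hf). rewrite (k_inv (fand g f) f); auto using fi_and.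
 pose proof (k_nn (fand g (fneg f)) (fi_and _ _ Hg (fi_neg _ Hf))). lra.
 intro v. simpl. split; [tauto|]. intro; split; auto. Qed.
Lemma k_oneand h B : formula_in C S h -> formula_in C S B -> m B = 1%R -> m (fand h B) = m h.
Proof. intros Hh HB H1. rewrite (k_split h B Hh HB).
 assert (m (fand h (fneg B)) <= m (fneg B))%R by (apply k_mono; auto using fi_and, fi_neg; intros v Hv; apply Hv).
 pose proof (k_compl B HB). pose proof (k_nn _ (fi_and _ _ Hh (fi_neg _ HB))). lra. Qed.

Lemma fi_bigOr n F : (forall i, i < n -> formula_in C S (F i)) -> formula_in C S (fbigOr n F).
Proof. induction n; simpl; intros H. apply fi_bot. apply fi_or. apply IHn; intros; apply H; lia. apply H; lia. Qed.

Lemma k_bigOr n F : (forall i, i < n -> formula_in C S (F i)) ->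
  (forall i j v, i < j -> j < n -> ~ (sat v (F i) /\ sat v (F j))) ->
  m (fbigOr n F) = sumR n (fun i => m (F i)).
Proof. induction n; intros HF HD; simpl.
- apply k_unsat. apply fi_bot. intros v H; exact H.
- rewrite k_add. rewrite IHn. reflexivity. intros; apply HF; lia. intros; apply HD; lia.
  apply fi_bigOr; intros; apply HF; lia. apply HF; lia.
  intros v [H1 H2]. rewrite sat_fbigOr in H1. destruct H1 as [i [Hi H1]]. apply (HD i n v); auto. Qed.
End Meas.
Local Open Scope nat_scope.

Lemma tfv_tmul {P : Type} (S : nat -> Prop) N (t : term P) : tfv_in S t -> tfv_in S (tmul N t).
Proof. induction N; simpl; auto. Qed.

Section Cls.
Variable U : structure.
Variable iota : Z -> U.
Hypothesis Hel : elementary_emb Zstruct U iota.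

Definition cy (N j : nat) : form U := congF (iota (Z.of_nat j)) N 1 2.
Lemma sat_cy v N j : sat v (cy N j) <-> congU U iota N j (v 1).
Proof. unfold cy. rewrite sat_congF by lia. reflexivity. Qed.
Lemma fi_cy (S : nat -> Prop) N j : S 1 -> formula_in (@allU U) S (cy N j).
Proof. intro HS. split; [|apply par_allU]. unfold cy, congF. simpl. split; auto. split; auto.
 apply tfv_tmul. simpl. auto. Qed.

Lemma cy_disj N i j v : i < N -> j < N -> i <> j -> ~ (sat v (cy N i) /\ sat v (cy N j)).
Proof. intros Hi Hj Hne [H1 H2]. rewrite sat_cy in H1, H2. apply Hne. eapply U4; eauto. Qed.

Section K.
Variable S : nat -> Prop.
Hypothesis HS : S 1.
Variable rho : form U -> R.
Hypothesis Hr : keisler (@allU U) S rho.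

Lemma part N h : 0 < N -> formula_in (@allU U) S h -> rho h = sumR N (fun j => rho (fand h (cy N j))).
Proof. intros HN Hh. rewrite <- (k_bigOr _ _ _ Hr).
- apply (k_inv _ _ _ Hr); auto. apply fi_bigOr. intros; apply fi_and; auto. apply fi_cy; auto.
  intro v. rewrite sat_fbigOr. split.
  + intro H. destruct (U3 U iota Hel N (v 1) HN) as [j [Hj Hc]]. exists j. split; auto. split; auto. apply sat_cy; auto.
  + intros [j [_ [H _]]]. auto.
- intros. apply fi_and; auto. apply fi_cy; auto.
- intros i j v Hij HjN [[_ H1] [_ H2]]. apply (cy_disj N i j v); auto; lia.
Qed.

Lemma sum_cy N : 0 < N -> sumR N (fun j => rho (cy N j)) = 1%R.
Proof. intro HN. rewrite <- (k_one _ _ _ Hr (fneg fbot)).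
- rewrite (part N (fneg fbot)); auto. apply sumR_ext. intros j Hj. apply (k_inv _ _ _ Hr).
  apply fi_cy; auto. apply fi_and. apply fi_neg, fi_bot. apply fi_cy; auto. intro v. simpl. tauto.
  apply fi_neg, fi_bot.
- apply fi_neg, fi_bot.
- intros v H; exact H.
Qed.

Lemma refine N k j : 0 < N -> 0 < k -> j < N -> rho (cy N j) = sumR k (fun t => rho (cy (N * k) (j + t * N))).
Proof. intros HN Hk Hj. rewrite <- (k_bigOr _ _ _ Hr).
- apply (k_inv _ _ _ Hr). apply fi_cy; auto. apply fi_bigOr; intros; apply fi_cy; auto.
  intro v. rewrite sat_fbigOr, sat_cy. split.
  + intro H. destruct (U3 U iota Hel (N * k) (v 1) ltac:(lia)) as [i [Hi Hc]].
    pose proof (U5 U iota Hel N k i (v 1) HN Hc) as H5.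
    assert (Hm : i mod N = j).
    { apply (U4 U iota Hel N (i mod N) j (v 1)); auto. apply Nat.mod_upper_bound; lia. }
    exists (i / N). split. apply Nat.Div0.div_lt_upper_bound. lia.
    rewrite sat_cy. replace (j + i / N * N) with i; auto. pose proof (Nat.div_mod_eq i N). lia.
  + intros [t [Ht H]]. rewrite sat_cy in H. pose proof (U5 U iota Hel N k _ (v 1) HN H) as H5.
    rewrite Nat.Div0.mod_add, Nat.mod_small in H5 by auto. exact H5.
- intros; apply fi_cy; auto.
- intros t t' v Ht Ht'. apply cy_disj; nia.
Qed.
End K.

Lemma tfv_dirf_helper : True. Proof. exact I. Qed.
End Cls.
Local Open Scope nat_scope.

Lemma tpar_tmul {P : Type} (C : P -> Prop) N (t : term P) : tpar_in C t -> tpar_in C (tmul N t).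
Proof. induction N; simpl; auto. Qed.

Section Main.
Variable U : structure.
Variable iota : Z -> U.
Hypothesis Hel : elementary_emb Zstruct U iota.
Variable sg : bool.
Variables mu nu : form U -> R.
Hypothesis Hmu : keisler (@allU U) Sx mu.
Hypothesis Hnu : keisler (@allU U) Sy nu.

Notation cy := (cy U iota).
Notation congU := (congU U iota).
Notation validU := (validU U iota sg).

Definition BB (g : form U) := fbnd g + 3.
Definition Gf N j (g : form U) : form U :=
  fex (BB g) (fall 1 (fimp (fand (dirf sg (tvar (BB g)) (tvar 1)) (cy N j)) g)).

Lemma sat_Gf v N j g : sat v (Gf N j g) <-> exists b, forall a, beyond sg b a -> congU N j a -> sat (upd v 1 a) g.
Proof.
  unfold Gf. rewrite sat_fex.
  assert (Hfr : forall b a, sat (upd (upd v (BB g) b) 1 a) g <-> sat (upd v 1 a) g).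
  { intros b a. apply sat_fresh. intros n Hn. unfold BB in *. destruct (Nat.eq_dec n 1) as [->|Hn1]; updsimp; reflexivity. }
  split; intros [b Hb]; exists b.
  - intros a Ha Hc. rewrite sat_fall in Hb. specialize (Hb a). rewrite sat_fimp, sat_fand, sat_dirf, sat_cy in Hb.
    simpl in Hb. unfold BB in Hb. updsimp_in Hb. rewrite <- Hfr. apply Hb. split; auto.
  - rewrite sat_fall. intro a. rewrite sat_fimp, sat_fand, sat_dirf, sat_cy. simpl. unfold BB. updsimp.
    intros [Ha Hc]. fold (BB g). rewrite Hfr. auto.
Qed.

Lemma fi_Gf N j g : fv_in Sxy g -> formula_in (@allU U) Sx (Gf N j g).
Proof. intro Hg. split; [|apply par_allU].
  set (S1 := fun k => k = 1 \/ (k = BB g \/ Sx k)).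
  assert (H1 : fv_in S1 (dirf sg (@tvar U (BB g)) (tvar 1))) by (destruct sg; simpl; unfold S1; tauto).
  assert (H2 : fv_in S1 (cy N j)) by (apply (proj1 (fi_cy U iota S1 N j ltac:(unfold S1; tauto)))).
  assert (H3 : fv_in S1 g) by (apply (fv_mono g Sxy); auto; unfold Sxy, S1, Sx; intros k [-> | ->]; tauto).
  exact (conj (conj H1 H2) H3).
Qed.

Definition Nsel (g : form U) : nat := epsilon (inhabits 1) (fun N => 0 < N /\ validU N g).
Lemma Nsel_spec g : 0 < Nsel g /\ validU (Nsel g) g.
Proof. unfold Nsel. apply (epsilon_spec (inhabits 1) (fun N => 0 < N /\ validU N g)). apply Uper; auto. Qed.

Lemma valid_mult N k g : validU N g -> 0 < N -> 0 < k -> validU (N * k) g.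
Proof. intros Hv HN Hk v. destruct (Hv v) as [b Hb]. exists b. intros j a a' Hj Ha Ha' Hc Hc'.
  apply (Hb (j mod N)); auto. apply Nat.mod_upper_bound; lia.
  apply (U5 U iota Hel N k j a HN Hc). apply (U5 U iota Hel N k j a' HN Hc'). Qed.

Lemma valid_equiv N g g' : (forall v, sat v g <-> sat v g') -> validU N g -> validU N g'.
Proof. intros He Hv v. destruct (Hv v) as [b Hb]. exists b. intros j a a' Hj Ha Ha' Hc Hc'. rewrite <- !He. apply (Hb j); auto. Qed.

Lemma Gf_refine N k j t g : validU N g -> 0 < N -> 0 < k -> j < N -> t < k ->
  forall v, sat v (Gf (N * k) (j + t * N) g) <-> sat v (Gf N j g).
Proof. intros Hv HN Hk Hj Ht v. rewrite !sat_Gf.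
  assert (Hmod : (j + t * N) mod N = j) by (rewrite Nat.Div0.mod_add; apply Nat.mod_small; auto).
  split.
  - intros [b Hb]. destruct (Hv v) as [b0 Hb0]. exists b0. intros a Ha Hc.
    destruct (U1 U iota Hel sg b b0) as [c [Hc1 Hc2]].
    destruct (U2 U iota Hel sg (N * k) (j + t * N) c ltac:(lia)) as [a' [Ha' Hc']].
    assert (Hga' : sat (upd v 1 a') g) by (apply Hb; auto; eapply U0; eauto).
    pose proof (U5 U iota Hel N k (j + t * N) a' HN Hc') as H5. rewrite Hmod in H5.
    apply (proj2 (Hb0 j a a' Hj Ha (U0 U iota Hel sg _ _ _ Hc2 Ha') Hc H5)). exact Hga'.
  - intros [b Hb]. exists b. intros a Ha Hc. apply Hb; auto.
    pose proof (U5 U iota Hel N k _ a HN Hc) as H5. rewrite Hmod in H5. exact H5.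
Qed.

Definition lamN N (g : form U) : R := sumR N (fun j => (nu (cy N j) * mu (Gf N j g))%R).
Definition lam (g : form U) : R := lamN (Nsel g) g.

Lemma lam_indep N k g : validU N g -> 0 < N -> 0 < k -> fv_in Sxy g -> lamN N g = lamN (N * k) g.
Proof. intros Hv HN Hk Hg. unfold lamN. rewrite sumR_block. apply sumR_ext. intros j Hj.
  rewrite (sumR_ext _ _ (fun t => (nu (cy (N * k) (j + t * N)) * mu (Gf N j g))%R)).
  - rewrite sumR_scale_r. f_equal. apply (refine U iota Hel Sy eq_refl nu Hnu); auto.
  - intros t Ht. f_equal. apply (k_inv _ _ _ Hmu); try apply fi_Gf; auto.
    intro v. rewrite Gf_refine; auto. reflexivity.
Qed.

Lemma lam_any M g : validU M g -> 0 < M -> fv_in Sxy g -> lam g = lamN M g.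
Proof. intros Hv HM Hg. destruct (Nsel_spec g) as [HN HvN]. unfold lam.
  rewrite (lam_indep (Nsel g) M g), (lam_indep M (Nsel g) g); auto. rewrite Nat.mul_comm. reflexivity. Qed.

Lemma fv_or (S : nat -> Prop) (f g : form U) : fv_in S f -> fv_in S g -> fv_in S (fOr f g).
Proof. simpl. tauto. Qed.

Lemma lam_keisler : keisler (inZ iota) Sxy lam.
Proof. split; [|split; [|split]].
- intros g g' [Hg _] [Hg' _] Heq. destruct (Nsel_spec g) as [HN Hv].
  rewrite (lam_any (Nsel g) g' (valid_equiv _ g g' Heq Hv) HN Hg'). unfold lam, lamN.
  apply sumR_ext. intros j Hj. f_equal. apply (k_inv _ _ _ Hmu); try apply fi_Gf; auto.
  intro v. rewrite !sat_Gf. split; intros [b Hb]; exists b; intros; [apply (proj1 (Heq _)) | apply (proj2 (Heq _))]; auto.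
- intros g [Hg _]. unfold lam, lamN. apply sumR_nonneg. intros j Hj. apply Rmult_le_pos.
  apply (k_nn _ _ _ Hnu). apply fi_cy. reflexivity.
  apply (k_nn _ _ _ Hmu). apply fi_Gf; auto.
- intros g [Hg _] Hval. unfold lam, lamN. destruct (Nsel_spec g) as [HN _].
  rewrite (sumR_ext _ _ (fun j => nu (cy (Nsel g) j))). apply (sum_cy U iota Hel Sy eq_refl nu Hnu); auto.
  intros j Hj. rewrite (k_one _ _ _ Hmu (Gf _ j g)). lra. apply fi_Gf; auto.
  intro v. rewrite sat_Gf. exists (s0 U). intros; apply Hval.
- intros g h [Hg _] [Hh _] Hdis.
  destruct (Nsel_spec g) as [H1 V1]. destruct (Nsel_spec h) as [H2 V2]. destruct (Nsel_spec (fOr g h)) as [H3 V3].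
  set (M := Nsel g * Nsel h * Nsel (fOr g h)).
  assert (HM : 0 < M) by (unfold M; apply Nat.mul_pos_pos; [apply Nat.mul_pos_pos|]; auto).
  assert (Vg : validU M g). { replace M with (Nsel g * (Nsel h * Nsel (fOr g h))) by (unfold M; ring).
    apply valid_mult; auto. apply Nat.mul_pos_pos; auto. }
  assert (Vh : validU M h). { replace M with (Nsel h * (Nsel g * Nsel (fOr g h))) by (unfold M; ring).
    apply valid_mult; auto. apply Nat.mul_pos_pos; auto. }
  assert (Vo : validU M (fOr g h)). { replace M with (Nsel (fOr g h) * (Nsel g * Nsel h)) by (unfold M; ring).
    apply valid_mult; auto. apply Nat.mul_pos_pos; auto. }
  clearbody M.
  rewrite (lam_any M (fOr g h)), (lam_any M g), (lam_any M h); auto; [|apply fv_or; auto].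
  unfold lamN. rewrite <- sumR_add. apply sumR_ext. intros j Hj. rewrite <- Rmult_plus_distr_l. f_equal.
  rewrite <- (k_add _ _ _ Hmu); try apply fi_Gf; auto.
  + apply (k_inv _ _ _ Hmu). apply fi_Gf, fv_or; auto. apply fi_or; apply fi_Gf; auto.
    intro v. rewrite sat_fOr, !sat_Gf. split.
    * intros [b Hb]. destruct (Vg v) as [bg Hbg]. destruct (Vh v) as [bh Hbh].
      destruct (U1 U iota Hel sg b bg) as [c1 [Hc1 Hc1']]. destruct (U1 U iota Hel sg c1 bh) as [c2 [Hc2 Hc2']].
      destruct (U2 U iota Hel sg M j c2 HM) as [a [Ha Hca]].
      assert (Hab : beyond sg b a) by exact (U0 U iota Hel sg _ _ _ Hc1 (U0 U iota Hel sg _ _ _ Hc2 Ha)).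
      assert (Habg : beyond sg bg a) by exact (U0 U iota Hel sg _ _ _ Hc1' (U0 U iota Hel sg _ _ _ Hc2 Ha)).
      assert (Habh : beyond sg bh a) by exact (U0 U iota Hel sg _ _ _ Hc2' Ha).
      specialize (Hb a Hab Hca). rewrite sat_fOr in Hb. destruct Hb as [Hga|Hha].
      -- left. exists bg. intros a' Ha' Hc'. apply (proj1 (Hbg j a a' Hj Habg Ha' Hca Hc')). exact Hga.
      -- right. exists bh. intros a' Ha' Hc'. apply (proj1 (Hbh j a a' Hj Habh Ha' Hca Hc')). exact Hha.
    * intros [[b Hb]|[b Hb]]; exists b; intros a Ha Hc; rewrite sat_fOr; auto.
  + intros v [Hg1 Hh1]. rewrite sat_Gf in Hg1, Hh1. destruct Hg1 as [b1 Hb1]. destruct Hh1 as [b2 Hb2].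
    destruct (U1 U iota Hel sg b1 b2) as [c [Hc1 Hc2]]. destruct (U2 U iota Hel sg M j c HM) as [a [Ha Hca]].
    apply (Hdis (upd v 1 a)). split; [apply Hb1|apply Hb2]; auto; eapply U0; eauto.
Qed.

Lemma lam_x f : fv_in Sx f -> lam (fand f (feq vy vy)) = mu f.
Proof. intro Hf. assert (Hg : fv_in Sxy (fand f (feq (@vy U) vy))).
  { simpl. split. apply (fv_mono f Sx); auto. unfold Sx, Sxy; tauto. unfold vy; simpl; unfold Sxy; tauto. }
  unfold lam, lamN. destruct (Nsel_spec (fand f (feq vy vy))) as [HN _].
  rewrite (sumR_ext _ _ (fun j => (nu (cy (Nsel (fand f (feq vy vy))) j) * mu f)%R)).
  rewrite sumR_scale_r, (sum_cy U iota Hel Sy eq_refl nu Hnu); auto. lra.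
  intros j Hj. f_equal. apply (k_inv _ _ _ Hmu); [apply fi_Gf; auto| split; [auto|apply par_allU]|].
  intro v. rewrite sat_Gf. split.
  - intros [b Hb]. destruct (U2 U iota Hel sg _ j b HN) as [a [Ha Hc]]. specialize (Hb a Ha Hc).
    destruct Hb as [Hb _]. rewrite (sat_fv f Sx v (upd v 1 a)); auto. intros n Hn. unfold Sx in Hn. subst. updsimp. reflexivity.
  - intro H. exists (s0 U). intros a _ _. split. rewrite (sat_fv f Sx (upd v 1 a) v); auto.
    intros n Hn. unfold Sx in Hn. subst. updsimp. reflexivity. reflexivity.
Qed.

Lemma lam_dir : lam (dirf sg vx vy) = 1%R.
Proof. assert (Hg : fv_in Sxy (dirf sg (@vx U) vy)) by (destruct sg; simpl; unfold Sxy; tauto).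
  unfold lam, lamN. destruct (Nsel_spec (dirf sg (@vx U) vy)) as [HN _].
  rewrite (sumR_ext _ _ (fun j => nu (cy (Nsel (dirf sg (@vx U) vy)) j))).
  apply (sum_cy U iota Hel Sy eq_refl nu Hnu); auto.
  intros j Hj. rewrite (k_one _ _ _ Hmu). lra. apply fi_Gf; auto.
  intro v. rewrite sat_Gf. exists (v 0). intros a Ha _. rewrite sat_dirf. unfold vx, vy. simpl. updsimp. exact Ha.
Qed.

Lemma lam_cy N j : 0 < N -> j < N -> lam (fand (feq vx vx) (cy N j)) = nu (cy N j).
Proof. intros HN Hj. set (g := fand (feq (@vx U) vx) (cy N j)).
  assert (Hg : fv_in Sxy g). { unfold g. simpl. split. unfold vx; simpl; unfold Sxy; tauto.
    apply (proj1 (fi_cy U iota Sxy N j ltac:(unfold Sxy; tauto))). }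
  assert (Hsg : forall v a, sat (upd v 1 a) g <-> congU N j a).
  { intros v a. unfold g. rewrite sat_fand, sat_cy, upd_same. simpl. tauto. }
  assert (Hv : validU N g).
  { intro v. exists (s0 U). intros i a a' Hi _ _ Hc Hc'. rewrite !Hsg. destruct (Nat.eq_dec i j) as [->|Hne].
    - tauto.
    - split; intro H; exfalso; apply Hne.
      exact (U4 U iota Hel N i j a Hi Hj Hc H). exact (U4 U iota Hel N i j a' Hi Hj Hc' H). }
  rewrite (lam_any N g Hv HN Hg). unfold lamN.
  rewrite <- (sumR_delta N j (fun i => nu (cy N i))) by auto. apply sumR_ext. intros i Hi. f_equal.
  destruct (Nat.eqb_spec i j).
  - subst. apply (k_one _ _ _ Hmu). apply fi_Gf; auto. intro v. rewrite sat_Gf. exists (s0 U).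
    intros a _ Hc. apply Hsg. auto.
  - apply (k_unsat _ _ _ Hmu). apply fi_Gf; auto. intros v H. rewrite sat_Gf in H. destruct H as [b Hb].
    destruct (U2 U iota Hel sg N i b HN) as [a [Ha Hc]]. specialize (Hb a Ha Hc). rewrite Hsg in Hb.
    apply n. exact (U4 U iota Hel N i j a Hi Hj Hc Hb).
Qed.

End Main.
Local Open Scope nat_scope.

Section Fin.
Variable U : structure.
Variable iota : Z -> U.
Hypothesis Hel : elementary_emb Zstruct U iota.

Lemma fi_lift (h : form U) : formula_in (@allU U) Sy h -> formula_in (@allU U) Sxy (fand (feq vx vx) h).
Proof. intros [Hh _]. split; [|apply par_allU]. simpl. split. unfold vx; simpl; unfold Sxy; tauto.
  apply (fv_mono h Sy); auto. unfold Sy, Sxy; tauto. Qed.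

Lemma marg_keisler (om : form U -> R) : keisler (@allU U) Sxy om ->
  keisler (@allU U) Sy (fun h => om (fand (feq vx vx) h)).
Proof. intro Hom. split; [|split; [|split]].
- intros f g Hf Hg Heq. apply (k_inv _ _ _ Hom); try apply fi_lift; auto.
  intro v. simpl. rewrite (Heq v). tauto.
- intros f Hf. apply (k_nn _ _ _ Hom). apply fi_lift; auto.
- intros f Hf Hv. apply (k_one _ _ _ Hom). apply fi_lift; auto. intro v. simpl. auto.
- intros f g Hf Hg Hd. rewrite <- (k_add _ _ _ Hom); try apply fi_lift; auto.
  + apply (k_inv _ _ _ Hom). apply fi_lift, fi_or; auto. apply fi_or; apply fi_lift; auto.
    intro v. rewrite sat_fOr, sat_fand, sat_fOr, !sat_fand. tauto.
  + intros v [[_ H1] [_ H2]]. apply (Hd v); auto.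
Qed.

Variable sg : bool.

Lemma uniq (rho1 rho2 : form U -> R) : keisler (@allU U) Sy rho1 -> keisler (@allU U) Sy rho2 ->
  (forall b, rho1 (dirf sg (tpar b) vy) = 1%R) -> (forall b, rho2 (dirf sg (tpar b) vy) = 1%R) ->
  (forall N j, 0 < N -> j < N -> rho1 (cy U iota N j) = rho2 (cy U iota N j)) ->
  forall f, formula_in (@allU U) Sy f -> rho1 f = rho2 f.
Proof. intros H1 H2 B1 B2 Hc f Hf.
  destruct (Uper U iota Hel sg f) as [N [HN Hv]].
  set (v0 := fun _ : nat => s0 U). destruct (Hv v0) as [b0 Hb0].
  set (Bf := dirf sg (tpar b0) (@vy U)).
  assert (HBf : formula_in (@allU U) Sy Bf) by (split; [unfold Bf, vy; destruct sg; simpl; unfold Sy; tauto | apply par_allU]).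
  assert (HSy : Sy 1) by reflexivity.
  assert (E : forall rho, keisler (@allU U) Sy rho -> rho Bf = 1%R ->
     rho f = sumR N (fun j => rho (fand (fand f Bf) (cy U iota N j)))).
  { intros rho Hr HB. rewrite <- (k_oneand _ _ _ Hr f Bf) by auto.
    apply (part U iota Hel Sy HSy rho Hr); auto. apply fi_and; auto. }
  assert (Hsat : forall v, sat v f <-> sat (upd v0 1 (v 1)) f).
  { intro v. apply (sat_fv f Sy); [|apply Hf]. intros n Hn. unfold Sy in Hn. subst. rewrite upd_same. reflexivity. }
  assert (HsB : forall v, sat v Bf <-> beyond sg b0 (v 1)).
  { intro v. unfold Bf. rewrite sat_dirf. reflexivity. }
  rewrite (E rho1), (E rho2); auto; [|unfold Bf; auto|unfold Bf; auto]. apply sumR_ext. intros j Hj.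
  destruct (classic (exists a, beyond sg b0 a /\ congU U iota N j a /\ sat (upd v0 1 a) f)) as [[a [Ha [Hca Hfa]]]|Hno].
  - assert (Heq : forall rho, keisler (@allU U) Sy rho -> rho Bf = 1%R ->
       rho (fand (fand f Bf) (cy U iota N j)) = rho (cy U iota N j)).
    { intros rho Hr HB. rewrite <- (k_oneand _ _ _ Hr (cy U iota N j) Bf) by (auto; apply fi_cy; auto).
      apply (k_inv _ _ _ Hr). apply fi_and; [apply fi_and|]; auto; apply fi_cy; auto.
      apply fi_and; auto; apply fi_cy; auto.
      intro v. rewrite !sat_fand, HsB, sat_cy, Hsat. split. tauto.
      intros [Hc1 Hb1]. split; auto. split; auto. apply (proj2 (Hb0 j (v 1) a Hj Hb1 Ha Hc1 Hca)). exact Hfa. }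
    rewrite !Heq; auto; unfold Bf; auto.
  - rewrite (k_unsat _ _ _ H1), (k_unsat _ _ _ H2); auto; try (apply fi_and; [apply fi_and|]; auto; apply fi_cy; auto).
    + intros v Hv'. rewrite !sat_fand, HsB, sat_cy, Hsat in Hv'. apply Hno. exists (v 1). tauto.
    + intros v Hv'. rewrite !sat_fand, HsB, sat_cy, Hsat in Hv'. apply Hno. exists (v 1). tauto.
Qed.

Variables mu nu : form U -> R.
Hypothesis Hmu : keisler (@allU U) Sx mu.
Hypothesis Hnu : keisler (@allU U) Sy nu.

Lemma main_sg : (forall b : U, mu (dirf sg (tpar b) vx) = 1%R /\ nu (dirf sg (tpar b) vy) = 1%R) -> geqEZ iota mu nu.
Proof. intro H. exists (lam U iota sg mu nu). split. apply lam_keisler; auto. split.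
  { intros f [Hf _]. apply lam_x; auto. }
  intros om Hom Hag Hmg f Hf.
  change ((fun h => om (fand (feq vx vx) h)) f = nu f).
  apply (uniq _ nu (marg_keisler om Hom) Hnu); auto.
  - intro b. cbv beta.
    set (X := dirf sg (@vx U) vy). set (Y := fand (dirf sg (tpar b) (@vx U)) (feq vy vy)).
    assert (HX : formula_in (@allU U) Sxy X) by (split; [unfold X, vx, vy; destruct sg; simpl; unfold Sxy; tauto|apply par_allU]).
    assert (HY : formula_in (@allU U) Sxy Y) by (split; [unfold Y, vx, vy; destruct sg; simpl; unfold Sxy; tauto|apply par_allU]).
    assert (HoX : om X = 1%R).
    { rewrite Hag. apply lam_dir; auto. split. unfold X, vx, vy; destruct sg; simpl; unfold Sxy; tauto.
      unfold X, vx, vy; destruct sg; simpl; auto. }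
    assert (HoY : om Y = 1%R).
    { unfold Y. rewrite Hmg. apply H. split. unfold vx; destruct sg; simpl; unfold Sx; tauto. apply par_allU. }
    assert (HT : om (fand Y X) = 1%R) by (rewrite (k_oneand _ _ _ Hom); auto).
    assert (HF : formula_in (@allU U) Sxy (fand (feq vx vx) (dirf sg (tpar b) vy))).
    { apply fi_lift. split. unfold vy; destruct sg; simpl; unfold Sy; tauto. apply par_allU. }
    apply Rle_antisym. apply (k_le1 _ _ _ Hom); auto.
    rewrite <- HT. apply (k_mono _ _ _ Hom); auto. apply fi_and; auto.
    intros v [[HYv _] HXv]. split. reflexivity. unfold X, Y in *. rewrite sat_dirf in HYv, HXv |- *.
    unfold vx, vy in *. simpl in *. eapply (U0 U iota Hel); eauto.
  - intro b. apply H.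
  - intros N j HN Hj. cbv beta. rewrite Hag. apply lam_cy; auto.
    split. simpl. split. unfold vx; simpl; unfold Sxy; tauto.
    apply (proj1 (fi_cy U iota Sxy N j ltac:(unfold Sxy; tauto))).
    simpl. split. auto. split. auto. split. apply tpar_tmul. simpl. auto. exists (Z.of_nat j). reflexivity.
Qed.
End Fin.

Theorem proposition6p3 (U : structure) (iota : Z -> U)
  (Hel : elementary_emb Zstruct U iota) (Hsat : saturated U)
  (mu nu : form U -> R)
  (Hmu : keisler (@allU U) Sx mu) (Hnu : keisler (@allU U) Sy nu) :
  ((forall b : U, mu (flt (tpar b) vx) = 1%R /\ nu (flt (tpar b) vy) = 1%R) ->
     geqEZ iota mu nu) /\
  ((forall b : U, mu (flt vx (tpar b)) = 1%R /\ nu (flt vy (tpar b)) = 1%R) ->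
     geqEZ iota mu nu).
Proof. split.
- exact (main_sg U iota Hel true mu nu Hmu Hnu).
- exact (main_sg U iota Hel false mu nu Hmu Hnu).
Qed.
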